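(* Let $g_2,g_3\in\mathbb{R}$ with $\Delta=g_2^3-27g_3^2>0$, and let $w$ (real, $w>0$) and $w'$ (purely imaginary, $\mathrm{Im}\,w'>0$) be the fundamental half-periods of the associated Weierstrass functions. Define \[ \widetilde{\Psi}_x(k)=\frac{\sigma(x+k+w')}{\sigma(x+w')\sigma(k)}e^{-\zeta(k)x-\zeta(w')k},\qquad \widetilde{\Psi}_x(k,l)=\frac{\sigma(x+k+l+w')}{\sigma(x+w')\sigma(k+l)}e^{-(\zeta(k)+\zeta(l))x-\zeta(w')(k+l)}. \] Then $\widetilde{\Psi}_x(k)$ and $\widetilde{\Psi}_x(k,l)$ are real-valued (wherever defined) when $x,k,l\in\mathbb{R}$.
   Context: $\sigma,\zeta,\wp$ are the Weierstrass sigma, zeta and elliptic functions with invariants $g_2,g_3$, i.e. $(\wp')^2=4\wp^3-g_2\wp-g_3$, $\zeta=\sigma'/\sigma$, $\wp=-\zeta'$, with period lattice generated by $2w,2w'$. *)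

(* Defs.v *)
From Stdlib Require Import Reals ZArith List.
From Coquelicot Require Import Coquelicot.
Import ListNotations.
Open Scope R_scope.

Definition cexp (z : C) : C :=
  (exp (Re z) * cos (Im z), exp (Re z) * sin (Im z)).

Definition Clim (u : nat -> C) : C :=
  (real (Lim_seq (fun N => Re (u N))), real (Lim_seq (fun N => Im (u N)))).

Definition lat (w w' : C) (m n : Z) : C :=
  Cplus (Cmult (RtoC (2 * IZR m)) w) (Cmult (RtoC (2 * IZR n)) w').

Definition sq_idx (N : nat) : list (Z * Z) :=
  flat_map (fun i => map (fun j => (Z.of_nat i - Z.of_nat N, Z.of_nat j - Z.of_nat N)%Z)
                         (seq 0 (2 * N + 1)))
           (seq 0 (2 * N + 1)).

Definition nonzero_idx (p : Z * Z) : bool :=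
  negb (Z.eqb (fst p) 0 && Z.eqb (snd p) 0).

Definition lat_sum (w w' : C) (N : nat) (f : C -> C) : C :=
  fold_right Cplus (RtoC 0)
    (map (fun p => f (lat w w' (fst p) (snd p))) (filter nonzero_idx (sq_idx N))).
Definition lat_prod (w w' : C) (N : nat) (f : C -> C) : C :=
  fold_right Cmult (RtoC 1)
    (map (fun p => f (lat w w' (fst p) (snd p))) (filter nonzero_idx (sq_idx N))).

Definition wsigma (w w' : C) (z : C) : C :=
  Cmult z (Clim (fun N => lat_prod w w' N (fun O =>
     Cmult (Cminus (RtoC 1) (Cdiv z O))
           (cexp (Cplus (Cdiv z O) (Cdiv (Cmult z z) (Cmult (RtoC 2) (Cmult O O)))))))).

(* Weierstrass zeta function (its series; zeta = sigma'/sigma) *)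
Definition wzeta (w w' : C) (z : C) : C :=
  Cplus (Cinv z) (Clim (fun N => lat_sum w w' N (fun O =>
     Cplus (Cplus (Cinv (Cminus z O)) (Cinv O)) (Cdiv z (Cmult O O))))).

Definition wg2 (w w' : C) : C :=
  Cmult (RtoC 60) (Clim (fun N => lat_sum w w' N (fun O => Cinv (Cmult (Cmult O O) (Cmult O O))))).
Definition wg3 (w w' : C) : C :=
  Cmult (RtoC 140) (Clim (fun N => lat_sum w w' N (fun O =>
     Cinv (Cmult (Cmult O O) (Cmult (Cmult O O) (Cmult O O)))))).

Definition Psi1 (w w' : C) (x k : C) : C :=
  Cmult (Cdiv (wsigma w w' (Cplus (Cplus x k) w'))
              (Cmult (wsigma w w' (Cplus x w')) (wsigma w w' k)))
        (cexp (Copp (Cplus (Cmult (wzeta w w' k) x) (Cmult (wzeta w w' w') k)))).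

Definition Psi2 (w w' : C) (x k l : C) : C :=
  Cmult (Cdiv (wsigma w w' (Cplus (Cplus (Cplus x k) l) w'))
              (Cmult (wsigma w w' (Cplus x w')) (wsigma w w' (Cplus k l))))
        (cexp (Copp (Cplus (Cmult (Cplus (wzeta w w' k) (wzeta w w' l)) x)
                           (Cmult (wzeta w w' w') (Cplus k l))))).

(* Main.v *)
Require Import Defs.
From Stdlib Require Import Reals ZArith List Permutation Lia Bool Lra.
From Coquelicot Require Import Coquelicot.
Import ListNotations.
Open Scope R_scope.

Definition cprod (l : list C) : C := fold_right Cmult (RtoC 1) l.
Definition csum (l : list C) : C := fold_right Cplus (RtoC 0) l.

Lemma cprod_app l1 l2 : cprod (l1 ++ l2) = Cmult (cprod l1) (cprod l2).
Proof. induction l1; simpl. unfold cprod; simpl; ring. unfold cprod in *; simpl; rewrite IHl1; ring. Qed.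
Lemma csum_app l1 l2 : csum (l1 ++ l2) = Cplus (csum l1) (csum l2).
Proof. induction l1; simpl. unfold csum; simpl; ring. unfold csum in *; simpl; rewrite IHl1; ring. Qed.

Lemma perm_cprod l l' : Permutation l l' -> cprod l = cprod l'.
Proof. induction 1; unfold cprod in *; simpl; try congruence. ring. Qed.
Lemma perm_csum l l' : Permutation l l' -> csum l = csum l'.
Proof. induction 1; unfold csum in *; simpl; try congruence. ring. Qed.

Lemma perm_partition {A} (f : A -> bool) l :
  Permutation l (filter f l ++ filter (fun x => negb (f x)) l).
Proof.
  induction l; simpl; auto. destruct (f a); simpl. constructor; auto.
  apply Permutation_cons_app; auto.
Qed.

Definition inbox (N : nat) (p : Z * Z) : Prop :=
  (- Z.of_nat N <= fst p <= Z.of_nat N)%Z /\ (- Z.of_nat N <= snd p <= Z.of_nat N)%Z.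

Lemma In_sq_idx N p : In p (sq_idx N) <-> inbox N p.
Proof.
  unfold sq_idx, inbox. rewrite in_flat_map. split.
  - intros [i [Hi Hp]]. apply in_map_iff in Hp. destruct Hp as [j [Hj Hj']].
    apply in_seq in Hi. apply in_seq in Hj'. subst p. simpl. lia.
  - destruct p as [m n]; simpl; intros [H1 H2].
    exists (Z.to_nat (m + Z.of_nat N)). split. apply in_seq. lia.
    apply in_map_iff. exists (Z.to_nat (n + Z.of_nat N)). split.
    f_equal; lia. apply in_seq; lia.
Qed.

Lemma NoDup_flat_map {A B} (f : A -> list B) l :
  NoDup l -> (forall i, NoDup (f i)) ->
  (forall i j x, In x (f i) -> In x (f j) -> i = j) -> NoDup (flat_map f l).
Proof.
  intros Hl Hf Hd. induction Hl; simpl. constructor.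
  apply NoDup_app; auto. intros a Ha Ha'. apply in_flat_map in Ha'.
  destruct Ha' as [j [Hj Hj']]. assert (x = j) by (eapply Hd; eauto). subst; tauto.
Qed.

Lemma NoDup_sq_idx N : NoDup (sq_idx N).
Proof.
  unfold sq_idx. apply NoDup_flat_map. apply seq_NoDup.
  - intros i. apply FinFun.Injective_map_NoDup. intros a b H. inversion H. lia. apply seq_NoDup.
  - intros i j x H1 H2. apply in_map_iff in H1, H2. destruct H1 as [a [Ha _]]. destruct H2 as [b [Hb _]].
    subst x. inversion Hb. lia.
Qed.

Lemma length_sq_idx N : length (sq_idx N) = ((2*N+1)*(2*N+1))%nat.
Proof.
  unfold sq_idx. rewrite (flat_map_constant_length (c := (2*N+1)%nat)). rewrite length_seq. lia.
  intros. rewrite length_map, length_seq. lia.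
Qed.

Definition idx N := filter nonzero_idx (sq_idx N).

Lemma nonzero_idx_iff p : nonzero_idx p = true <-> p <> (0%Z, 0%Z).
Proof.
  destruct p as [m n]; unfold nonzero_idx; simpl. rewrite negb_true_iff, andb_false_iff, !Z.eqb_neq.
  split. intros [H|H] E; inversion E; auto. intros H. destruct (Z.eq_dec m 0); subst; auto.
  right. intro; subst; auto.
Qed.

Lemma In_idx N p : In p (idx N) <-> inbox N p /\ p <> (0%Z, 0%Z).
Proof. unfold idx. rewrite filter_In, In_sq_idx, nonzero_idx_iff. tauto. Qed.

Lemma NoDup_idx N : NoDup (idx N).
Proof. apply NoDup_filter, NoDup_sq_idx. Qed.

Lemma zero_part N : Permutation (filter (fun x => negb (nonzero_idx x)) (sq_idx N)) [(0%Z,0%Z)].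
Proof.
  apply NoDup_Permutation. apply NoDup_filter, NoDup_sq_idx. repeat constructor; simpl; tauto.
  intros p. rewrite filter_In, In_sq_idx, negb_true_iff. simpl.
  assert (nonzero_idx p = false <-> p = (0%Z,0%Z)).
  { destruct p as [m n]; unfold nonzero_idx; simpl.
    destruct (Z.eqb_spec m 0), (Z.eqb_spec n 0); subst; simpl; split; intros E; try congruence; inversion E; congruence. }
  rewrite H. split. intros [_ ->]; auto. intros [<-|[]]. split; auto. unfold inbox; simpl; lia.
Qed.

Lemma length_idx N : length (idx N) = ((2*N+1)*(2*N+1) - 1)%nat.
Proof.
  pose proof (Permutation_length (perm_partition nonzero_idx (sq_idx N))) as H.
  rewrite length_app, (Permutation_length (zero_part N)), length_sq_idx in H. simpl in H.
  unfold idx. lia.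
Qed.

Lemma cprod_sq_idx N (g : Z*Z -> C) :
  cprod (map g (sq_idx N)) = Cmult (cprod (map g (idx N))) (g (0%Z,0%Z)).
Proof.
  rewrite (perm_cprod _ _ (Permutation_map g (perm_partition nonzero_idx (sq_idx N)))).
  rewrite map_app, cprod_app. rewrite (perm_cprod _ _ (Permutation_map g (zero_part N))).
  unfold cprod at 3; simpl. fold (idx N). f_equal. ring.
Qed.

Lemma csum_sq_idx N (g : Z*Z -> C) :
  csum (map g (sq_idx N)) = Cplus (csum (map g (idx N))) (g (0%Z,0%Z)).
Proof.
  rewrite (perm_csum _ _ (Permutation_map g (perm_partition nonzero_idx (sq_idx N)))).
  rewrite map_app, csum_app. rewrite (perm_csum _ _ (Permutation_map g (zero_part N))).
  unfold csum at 3; simpl. fold (idx N). f_equal. ring.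
Qed.

Lemma perm_idx_sym N (s : Z*Z -> Z*Z) :
  (forall p, s (s p) = p) -> (forall p, inbox N p -> inbox N (s p)) -> s (0%Z,0%Z) = (0%Z,0%Z) ->
  Permutation (idx N) (map s (idx N)).
Proof.
  intros Hs Hb H0. apply NoDup_Permutation. apply NoDup_idx.
  apply FinFun.Injective_map_NoDup. intros a b E. rewrite <- (Hs a), <- (Hs b), E; auto. apply NoDup_idx.
  intros p. rewrite in_map_iff. split.
  - intros Hp. exists (s p). split; auto. apply In_idx in Hp. apply In_idx. destruct Hp as [H1 H2]. split; auto.
    intro E. apply H2. rewrite <- (Hs p), E; auto.
  - intros [q [<- Hq]]. apply In_idx in Hq. apply In_idx. destruct Hq as [H1 H2]. split; auto.
    intro E. apply H2. rewrite <- (Hs q), E; auto.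
Qed.

Definition inboxb (N : nat) (p : Z * Z) : bool :=
  ((- Z.of_nat N <=? fst p) && (fst p <=? Z.of_nat N) && (- Z.of_nat N <=? snd p) && (snd p <=? Z.of_nat N))%Z.
Lemma inboxb_iff N p : inboxb N p = true <-> inbox N p.
Proof. unfold inboxb, inbox. rewrite !andb_true_iff, !Z.leb_le. tauto. Qed.

Definition shell N := filter (fun p => negb (inboxb N p)) (idx (S N)).

Lemma perm_shell N : Permutation (idx (S N)) (idx N ++ shell N).
Proof.
  eapply perm_trans. apply (perm_partition (inboxb N)). apply Permutation_app_tail.
  apply NoDup_Permutation. apply NoDup_filter, NoDup_idx. apply NoDup_idx.
  intros [m n]. rewrite filter_In, !In_idx, inboxb_iff. unfold inbox; simpl. split; intros; intuition lia.
Qed.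

Lemma length_shell N : length (shell N) = (8 * (N+1))%nat.
Proof.
  pose proof (Permutation_length (perm_shell N)). rewrite length_app, !length_idx in H. lia.
Qed.

Lemma In_shell N m n : In (m, n) (shell N) ->
  (Z.of_nat (S N) <= Z.abs m)%Z \/ (Z.of_nat (S N) <= Z.abs n)%Z.
Proof.
  unfold shell. rewrite filter_In, In_idx, negb_true_iff. intros [_ H].
  assert (~ inbox N (m,n)). { rewrite <- inboxb_iff. congruence. }
  unfold inbox in H0; simpl in H0. lia.
Qed.

Lemma cprod_flat_map {A B} (g : B -> C) (F : A -> list B) l :
  cprod (map g (flat_map F l)) = cprod (map (fun i => cprod (map g (F i))) l).
Proof. induction l; simpl; auto. rewrite map_app, cprod_app, IHl. reflexivity. Qed.
Lemma csum_flat_map {A B} (g : B -> C) (F : A -> list B) l :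
  csum (map g (flat_map F l)) = csum (map (fun i => csum (map g (F i))) l).
Proof. induction l; simpl; auto. rewrite map_app, csum_app, IHl. reflexivity. Qed.

Lemma cprod_sq_iter N (g : Z*Z -> C) :
  cprod (map g (sq_idx N)) =
  cprod (map (fun i => cprod (map (fun j => g (Z.of_nat i - Z.of_nat N, Z.of_nat j - Z.of_nat N)%Z)
     (seq 0 (2*N+1)))) (seq 0 (2*N+1))).
Proof. unfold sq_idx. rewrite cprod_flat_map. f_equal. apply map_ext. intros. rewrite map_map. auto. Qed.
Lemma csum_sq_iter N (g : Z*Z -> C) :
  csum (map g (sq_idx N)) =
  csum (map (fun i => csum (map (fun j => g (Z.of_nat i - Z.of_nat N, Z.of_nat j - Z.of_nat N)%Z)
     (seq 0 (2*N+1)))) (seq 0 (2*N+1))).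
Proof. unfold sq_idx. rewrite csum_flat_map. f_equal. apply map_ext. intros. rewrite map_map. auto. Qed.

Lemma Ceq (a b : C) : Re a = Re b -> Im a = Im b -> a = b.
Proof. destruct a, b; simpl; intros; subst; auto. Qed.

Lemma cexp_add a b : cexp (Cplus a b) = Cmult (cexp a) (cexp b).
Proof.
  destruct a as [a1 a2], b as [b1 b2]; unfold cexp; apply Ceq; simpl;
  rewrite exp_plus; try rewrite cos_plus; try rewrite sin_plus; ring.
Qed.

Lemma cexp_0 : cexp (RtoC 0) = RtoC 1.
Proof. unfold cexp; apply Ceq; simpl; rewrite exp_0, ?cos_0, ?sin_0; ring. Qed.

Lemma Cmod_cexp z : Cmod (cexp z) = exp (Re z).
Proof.
  destruct z as [a b]; unfold cexp, Cmod; cbn [fst snd Re Im].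
  replace ((exp a * cos b)^2 + (exp a * sin b)^2) with ((exp a)^2) .
  rewrite sqrt_pow2; auto. left; apply exp_pos.
  pose proof (sin2_cos2 b) as H; unfold Rsqr in H.
  transitivity (exp a ^ 2 * (sin b * sin b + cos b * cos b)). rewrite H; ring. ring.
Qed.

Lemma cexp_nz z : cexp z <> RtoC 0.
Proof. intro E. pose proof (Cmod_cexp z). rewrite E, Cmod_0 in H. pose proof (exp_pos (Re z)). lra. Qed.

Lemma cexp_conj z : Cconj (cexp z) = cexp (Cconj z).
Proof.
  destruct z as [a b]; unfold cexp, Cconj; apply Ceq; simpl; rewrite ?cos_neg, ?sin_neg; ring.
Qed.

Lemma cexp_csum l : cexp (csum l) = cprod (map cexp l).
Proof. induction l; simpl. apply cexp_0. unfold csum in *; simpl. rewrite cexp_add, IHl. reflexivity. Qed.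

Lemma cexp_split a b : cexp (a, b) = Cmult (RtoC (exp a)) (cexp (0, b)).
Proof. unfold cexp; apply Ceq; simpl; rewrite exp_0; ring. Qed.

Lemma Cconj_RtoC r : Cconj (RtoC r) = RtoC r.
Proof. apply Ceq; simpl; ring. Qed.

Lemma Cconj_inv z : Cconj (Cinv z) = Cinv (Cconj z).
Proof. destruct z as [a b]; apply Ceq; unfold Cconj, Cinv; simpl;
  replace (a * (a * 1) + - b * (- b * 1)) with (a * (a * 1) + b * (b * 1)) by ring; unfold Rdiv; ring. Qed.

Lemma Cconj_div a b : Cconj (Cdiv a b) = Cdiv (Cconj a) (Cconj b).
Proof. unfold Cdiv. rewrite Cmult_conj, Cconj_inv. auto. Qed.

Lemma Cinv_0 : Cinv (RtoC 0) = RtoC 0.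
Proof. apply Ceq; unfold Cinv; simpl; unfold Rdiv; ring. Qed.

Lemma lat_eq w t m n : lat (RtoC w) (0, t) m n = (2 * IZR m * w, 2 * IZR n * t).
Proof. unfold lat; apply Ceq; simpl; ring. Qed.

Lemma Dn_exp n x : Derive_n exp n x = exp x.
Proof.
  revert x; induction n; intros x; simpl; auto.
  rewrite (Derive_ext _ exp x IHn). apply is_derive_unique, is_derive_exp.
Qed.

Lemma exn_exp k t : ex_derive_n exp k t.
Proof.
  destruct k; simpl; auto. apply (ex_derive_ext exp). intros; rewrite Dn_exp; auto.
  eexists; apply is_derive_exp.
Qed.

Lemma exp_taylor_pos (n : nat) b : 0 < b ->
  exists z, 0 < z < b /\ exp b = sum_f_R0 (fun m => b ^ m / INR (fact m)) n + b ^ S n / INR (fact (S n)) * exp z.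
Proof.
  intros Hb. destruct (Taylor_Lagrange exp n 0 b Hb) as [z [Hz E]].
  intros; apply exn_exp. exists z; split; auto. rewrite E, Dn_exp. f_equal.
  apply sum_eq. intros. rewrite Dn_exp, exp_0. replace (b - 0) with b by ring. ring.
  replace (b - 0) with b by ring. auto.
Qed.

Lemma exp1_le3 z : z <= 1 -> exp z <= 3.
Proof. intros. pose proof exp_le_3. destruct (Req_dec z 1). subst; auto.
  pose proof (exp_increasing z 1). lra. Qed.

Lemma exp_pos_bounds b : 0 <= b <= 1 ->
  0 <= exp b - 1 - b - b^2/2 <= b^3/2 /\ 0 <= exp b - 1 - b <= 3*b^2/2 /\ 0 <= exp b - 1 <= 3*b.
Proof.
  intros Hb. destruct (Req_dec b 0). subst. rewrite exp_0. lra.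
  assert (0 < b) by lra.
  destruct (exp_taylor_pos 2 b H0) as [z2 [Hz2 E2]].
  destruct (exp_taylor_pos 1 b H0) as [z1 [Hz1 E1]].
  destruct (exp_taylor_pos 0 b H0) as [z0 [Hz0 E0]].
  simpl in E0, E1, E2.
  pose proof (exp1_le3 z2) as A2. pose proof (exp1_le3 z1) as A1. pose proof (exp1_le3 z0) as A0.
  pose proof (exp_pos z2). pose proof (exp_pos z1). pose proof (exp_pos z0).
  assert (0 <= b^3) by (apply pow_le; lra). assert (0 <= b^2) by (apply pow_le; lra).
  split; [|split].
  - rewrite E2. unfold fact in *; simpl in *. split; [|]. 
    + assert (0 <= b*(b*(b*1))/(1+1+1+1+1+1)*exp z2). { apply Rmult_le_pos; [|lra]. unfold Rdiv. apply Rmult_le_pos. nra. lra. }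
      field_simplify; lra.
    + assert (b*(b*(b*1))/(1+1+1+1+1+1)*exp z2 <= b^3/2). { simpl. unfold Rdiv. replace (b*(b*(b*1))) with (b*(b*b)) by ring.
        assert (0 <= b*(b*b)) by nra. nra. }
      field_simplify; lra.
  - rewrite E1. unfold fact in *; simpl in *. split.
    + assert (0 <= b*(b*1)/(1+1)*exp z1). { apply Rmult_le_pos; [|lra]. unfold Rdiv. apply Rmult_le_pos. nra. lra. }
      field_simplify; lra.
    + assert (b*(b*1)/(1+1)*exp z1 <= 3*b^2/2). { unfold Rdiv. replace (b*(b*1)) with (b*b) by ring. nra. }
      field_simplify; lra.
  - rewrite E0. unfold fact in *; simpl in *. split.
    + assert (0 <= b*1/1*exp z0) by (field_simplify; nra). field_simplify; lra.
    + assert (b*1/1*exp z0 <= 3*b) by (field_simplify; nra). field_simplify; lra.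
Qed.

Lemma exp_bounds a : Rabs a <= 1 ->
  Rabs (exp a - 1 - a - a^2/2) <= Rabs a ^ 3 /\ Rabs (exp a - 1 - a) <= 3 * a^2 /\ Rabs (exp a - 1) <= 3 * Rabs a.
Proof.
  intros Ha. destruct (Rle_dec 0 a).
  - assert (Ha' : 0 <= a <= 1) by (split_Rabs; lra).
    destruct (exp_pos_bounds a Ha') as [[H1 H2] [[H3 H4] [H5 H6]]].
    assert (0 <= a^3) by (apply pow_le; lra). assert (0 <= a^2) by (apply pow_le; lra).
    rewrite (Rabs_pos_eq a) by lra. repeat split; rewrite Rabs_pos_eq; lra.
  - apply Rnot_le_lt in n. set (b := -a). assert (0 <= b <= 1). { unfold b. revert Ha. unfold Rabs. destruct Rcase_abs; intros; lra. }
    replace a with (-b) by (unfold b; ring). rewrite Rabs_Ropp, (Rabs_pos_eq b) by lra.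
    destruct (exp_pos_bounds b H) as [[H1 H2] [[H3 H4] [H5 H6]]].
    pose proof (exp_pos b). assert (1 <= exp b) by lra.
    rewrite exp_Ropp. set (E := exp b) in *.
    assert (0 <= b^3) by (apply pow_le; lra). assert (0 <= b^2) by (apply pow_le; lra).
    assert (b^4 <= b^3) by (simpl; nra).
    assert (b^3 <= b^2) by (simpl; nra).
    split; [|split].
    +
      set (R2 := E - 1 - b - b^2/2) in *.
      assert (Hid : / E - 1 - - b - (-b)^2/2 = (- b^4/4 - (1 - b + b^2/2) * R2) / E).
      { unfold R2. field. lra. }
      rewrite Hid. rewrite Rabs_div by lra. rewrite (Rabs_pos_eq E) by lra.
      apply Rle_trans with (Rabs (- b ^ 4 / 4 - (1 - b + b ^ 2 / 2) * R2)).
      { unfold Rdiv. rewrite <- (Rmult_1_r (Rabs _)) at 2. apply Rmult_le_compat_l. apply Rabs_pos.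
        rewrite <- Rinv_1. apply Rinv_le_contravar; lra. }
      assert (0 <= 1 - b + b^2/2 <= 1) by (simpl; nra).
      assert (0 <= (1 - b + b^2/2) * R2 <= R2) by nra.
      split_Rabs; nra.
    + set (R1 := E - 1 - b) in *.
      assert (Hid : / E - 1 - - b = (b^2 - (1 - b) * R1) / E). { unfold R1. field. lra. }
      rewrite Hid. rewrite Rabs_div by lra. rewrite (Rabs_pos_eq E) by lra.
      apply Rle_trans with (Rabs (b^2 - (1 - b) * R1)).
      { unfold Rdiv. rewrite <- (Rmult_1_r (Rabs _)) at 2. apply Rmult_le_compat_l. apply Rabs_pos.
        rewrite <- Rinv_1. apply Rinv_le_contravar; lra. }
      assert (0 <= (1 - b) * R1 <= R1) by nra.
      replace ((-b)^2) with (b^2) by ring. split_Rabs; nra.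
    + assert (Hid : / E - 1 = - (E - 1) / E). { field. lra. }
      rewrite Hid. rewrite Rabs_div by lra. rewrite (Rabs_pos_eq E) by lra.
      apply Rle_trans with (Rabs (- (E - 1))).
      { unfold Rdiv. rewrite <- (Rmult_1_r (Rabs _)) at 2. apply Rmult_le_compat_l. apply Rabs_pos.
        rewrite <- Rinv_1. apply Rinv_le_contravar; lra. }
      rewrite Rabs_Ropp, Rabs_pos_eq; lra.
Qed.

Lemma cos_lb_eq b : cos_lb b = 1 - b^2/2 + b^4/24 - b^6/720.
Proof. unfold cos_lb, cos_approx, cos_term. cbn [sum_f_R0]. cbn [Nat.mul Nat.add]. rewrite !fact_simpl, !mult_INR. cbn [Factorial.fact INR]. field. Qed.
Lemma cos_ub_eq b : cos_ub b = 1 - b^2/2 + b^4/24 - b^6/720 + b^8/40320.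
Proof. unfold cos_ub, cos_approx, cos_term. cbn [sum_f_R0]. cbn [Nat.mul Nat.add]. rewrite !fact_simpl, !mult_INR. cbn [Factorial.fact INR]. field. Qed.
Lemma sin_lb_eq b : sin_lb b = b - b^3/6 + b^5/120 - b^7/5040.
Proof. unfold sin_lb, sin_approx, sin_term. cbn [sum_f_R0]. cbn [Nat.mul Nat.add]. rewrite !fact_simpl, !mult_INR. cbn [Factorial.fact INR]. field. Qed.
Lemma sin_ub_eq b : sin_ub b = b - b^3/6 + b^5/120 - b^7/5040 + b^9/362880.
Proof. unfold sin_ub, sin_approx, sin_term. cbn [sum_f_R0]. cbn [Nat.mul Nat.add]. rewrite !fact_simpl, !mult_INR. cbn [Factorial.fact INR]. field. Qed.

Lemma pw_step b n : 0 <= b^n -> b^2 <= 1 -> b^(n+2) <= b^n.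
Proof. intros. replace (b^(n+2)) with (b^n*b^2) by (rewrite pow_add; ring). nra. Qed.

Lemma cos_bnd b : Rabs b <= 1 -> 0 <= cos b - 1 + b^2/2 <= b^4/24.
Proof.
  intros Hb. pose proof PI2_1. assert (- PI/2 <= b) by (split_Rabs; lra). assert (b <= PI/2) by (split_Rabs; lra).
  destruct (COS b H0 H1) as [L U]. rewrite cos_lb_eq in L. rewrite cos_ub_eq in U.
  assert (b^2 <= 1) by (rewrite <- (pow2_abs b); simpl; pose proof (Rabs_pos b); nra).
  assert (0 <= b^4) by (replace (b^4) with ((b^2)^2) by ring; apply pow2_ge_0).
  assert (0 <= b^6) by (replace (b^6) with ((b^3)^2) by ring; apply pow2_ge_0).
  assert (0 <= b^8) by (replace (b^8) with ((b^4)^2) by ring; apply pow2_ge_0).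
  pose proof (pw_step b 4 H3 H2). pose proof (pw_step b 6 H4 H2). cbn [Nat.add] in *.
  split; lra.
Qed.

Lemma sin_bnd_pos b : 0 <= b <= 1 -> Rabs (sin b - b) <= b^3/6.
Proof.
  intros Hb. pose proof PI2_1. assert (b <= PI) by lra.
  destruct (SIN b (proj1 Hb) H0) as [L U]. rewrite sin_lb_eq in L. rewrite sin_ub_eq in U.
  assert (b^2 <= 1) by (simpl; nra).
  assert (0 <= b^3) by (apply pow_le; lra). assert (0 <= b^5) by (apply pow_le; lra).
  assert (0 <= b^7) by (apply pow_le; lra). assert (0 <= b^9) by (apply pow_le; lra).
  pose proof (pw_step b 3 H2 H1). pose proof (pw_step b 7 H4 H1). pose proof (pw_step b 5 H3 H1). cbn [Nat.add] in *.
  split_Rabs; lra.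
Qed.

Lemma sin_bnd b : Rabs b <= 1 -> Rabs (sin b - b) <= Rabs b ^ 3 / 6.
Proof.
  intros Hb. destruct (Rle_dec 0 b).
  - rewrite (Rabs_pos_eq b) by lra. apply sin_bnd_pos. split_Rabs; lra.
  - apply Rnot_le_lt in n. rewrite (Rabs_left b) by lra. replace b with (- (-b)) at 1 2 by ring. rewrite sin_neg.
    replace (- sin (- b) - - (- b)) with (- (sin (-b) - (-b))) by ring. rewrite Rabs_Ropp.
    apply sin_bnd_pos. split_Rabs; lra.
Qed.

Lemma Cmod_le_abs z : Cmod z <= Rabs (Re z) + Rabs (Im z).
Proof.
  destruct z as [a b]; unfold Cmod; simpl. apply Rsqr_incr_0_var.
  rewrite Rsqr_sqrt. unfold Rsqr. split_Rabs; nra. nra.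
  pose proof (Rabs_pos a); pose proof (Rabs_pos b); lra.
Qed.

Lemma im_le_Cmod z : Rabs (Im z) <= Cmod z.
Proof. pose proof (Rmax_Cmod z). destruct z; simpl in *. pose proof (Rmax_r (Rabs r) (Rabs r0)). lra. Qed.

Lemma abs_mul_le x y X Y : Rabs x <= X -> Rabs y <= Y -> Rabs (x * y) <= X * Y.
Proof. intros. rewrite Rabs_mult. apply Rmult_le_compat; auto; apply Rabs_pos. Qed.

Lemma cexp_rem v : Cmod v <= 1 ->
  Cmod (Cminus (cexp v) (Cplus (Cplus (RtoC 1) v) (Cdiv (Cmult v v) (RtoC 2)))) <= 10 * Cmod v ^ 3.
Proof.
  intros Hv. set (rho := Cmod v) in *.
  pose proof (re_le_Cmod v) as Ha. pose proof (im_le_Cmod v) as Hb. fold rho in Ha, Hb.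
  assert (0 <= rho) by (unfold rho; apply Cmod_ge_0).
  destruct v as [a b]; simpl in Ha, Hb.
  assert (Ha1 : Rabs a <= 1) by lra. assert (Hb1 : Rabs b <= 1) by lra.
  destruct (exp_bounds a Ha1) as [E2 [E1 E0]].
  pose proof (cos_bnd b Hb1) as Cb. pose proof (sin_bnd b Hb1) as Sb.
  pose proof (exp1_le3 a ltac:(split_Rabs; lra)) as Ea. pose proof (exp_pos a).
  eapply Rle_trans. apply Cmod_le_abs.
  assert (HRe : Re (Cminus (cexp (a, b)) (Cplus (Cplus (RtoC 1) (a,b)) (Cdiv (Cmult (a,b) (a,b)) (RtoC 2))))
    = (exp a - 1 - a - a^2/2) + exp a * (cos b - 1 + b^2/2) + (exp a - 1) * (- (b^2 / 2))).
  { unfold cexp, Cdiv, Cinv; simpl. field. }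
  assert (HIm : Im (Cminus (cexp (a, b)) (Cplus (Cplus (RtoC 1) (a,b)) (Cdiv (Cmult (a,b) (a,b)) (RtoC 2))))
    = (sin b - b) * (1 + a) + (exp a - 1 - a) * sin b).
  { unfold cexp, Cdiv, Cinv; simpl. field. }
  rewrite HRe, HIm.
  assert (P3a : Rabs a ^ 3 <= rho ^ 3) by (apply pow_incr; split; [apply Rabs_pos| lra]).
  assert (P3b : Rabs b ^ 3 <= rho ^ 3) by (apply pow_incr; split; [apply Rabs_pos| lra]).
  assert (P2a : a^2 <= rho^2). { rewrite <- (pow2_abs a). apply pow_incr; split; [apply Rabs_pos|lra]. }
  assert (P2b : b^2 <= rho^2). { rewrite <- (pow2_abs b). apply pow_incr; split; [apply Rabs_pos|lra]. }
  assert (R21 : rho^2 <= 1) by (simpl; nra).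
  assert (R32 : rho^3 <= rho^2) by (simpl; nra).
  assert (P4b : b^4 <= rho^3).
  { replace (b^4) with (b^2*b^2) by ring. pose proof (pow2_ge_0 b).
    apply Rle_trans with (rho^2*rho^2). apply Rmult_le_compat; lra.
    assert (Er : rho^3 = rho^2*rho) by ring. rewrite Er. apply Rmult_le_compat_l. lra. simpl; nra. }
  assert (T1 : Rabs ((exp a - 1 - a - a^2/2) + exp a * (cos b - 1 + b^2/2) + (exp a - 1) * (- (b^2 / 2))) <= 3 * rho^3).
  { eapply Rle_trans. apply Rabs_triang. eapply Rle_trans. apply Rplus_le_compat_r. apply Rabs_triang.
    assert (X1 : Rabs (exp a * (cos b - 1 + b^2/2)) <= 3 * (rho^3/24)).
    { apply abs_mul_le. rewrite Rabs_pos_eq; lra. rewrite Rabs_pos_eq; lra. }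
    assert (X2 : Rabs ((exp a - 1) * (- (b^2 / 2))) <= (3 * rho) * (rho^2/2)).
    { apply abs_mul_le. lra. rewrite Rabs_Ropp, Rabs_pos_eq. lra. pose proof (pow2_ge_0 b); lra. }
    assert (Erho : (3*rho)*(rho^2/2) = 3/2*rho^3) by field. lra. }
  assert (T2 : Rabs ((sin b - b) * (1 + a) + (exp a - 1 - a) * sin b) <= 7 * rho^3).
  { eapply Rle_trans. apply Rabs_triang.
    assert (Sb2 : Rabs (sin b) <= 2 * rho).
    { replace (sin b) with ((sin b - b) + b) by ring. eapply Rle_trans. apply Rabs_triang.
      assert (Rabs b ^3 <= Rabs b) by (simpl; pose proof (Rabs_pos b); nra). lra. }
    assert (X1 : Rabs ((sin b - b) * (1 + a)) <= (rho^3/6) * 2).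
    { apply abs_mul_le. lra. split_Rabs; lra. }
    assert (X2 : Rabs ((exp a - 1 - a) * sin b) <= (3 * rho^2) * (2 * rho)).
    { apply abs_mul_le; lra. }
    assert (Erho : (3 * rho^2) * (2 * rho) = 6 * rho^3) by ring.
    lra. }
  lra.
Qed.

Definition Ef (z O : C) : C :=
  Cmult (Cminus (RtoC 1) (Cdiv z O))
        (cexp (Cplus (Cdiv z O) (Cdiv (Cmult z z) (Cmult (RtoC 2) (Cmult O O))))).

Lemma Cmod_RtoC_pos r : 0 <= r -> Cmod (RtoC r) = r.
Proof. intros. rewrite Cmod_R, Rabs_pos_eq; auto. Qed.

Lemma Cmod_triang3 a b c : Cmod (Cplus (Cplus a b) c) <= Cmod a + Cmod b + Cmod c.
Proof. eapply Rle_trans. apply Cmod_triangle. pose proof (Cmod_triangle a b). lra. Qed.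

Lemma abs1 : Rabs (-1/2) = 1/2. Proof. rewrite Rabs_left; lra. Qed.
Lemma abs2 : Rabs (-3/8) = 3/8. Proof. rewrite Rabs_left; lra. Qed.
Lemma abs3 : Rabs (-1/8) = 1/8. Proof. rewrite Rabs_left; lra. Qed.

Lemma Ef_bound z O : O <> RtoC 0 -> Cmod (Cdiv z O) <= 1/2 ->
  Cmod (Cminus (Ef z O) (RtoC 1)) <= 32 * Cmod (Cdiv z O) ^ 3.
Proof.
  intros HO Hu. unfold Ef. set (u := Cdiv z O) in *.
  assert (Ev : Cplus u (Cdiv (Cmult z z) (Cmult (RtoC 2) (Cmult O O))) = Cplus u (Cdiv (Cmult u u) (RtoC 2))).
  { unfold u. field. auto. }
  rewrite Ev. set (v := Cplus u (Cdiv (Cmult u u) (RtoC 2))).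
  set (r := Cminus (cexp v) (Cplus (Cplus (RtoC 1) v) (Cdiv (Cmult v v) (RtoC 2)))).
  assert (Eid : Cminus (Cmult (Cminus (RtoC 1) u) (cexp v)) (RtoC 1) =
     Cplus (Cplus (Cmult (RtoC (-1/2)) (Cmult u (Cmult u u)))
                  (Cmult (RtoC (-3/8)) (Cmult (Cmult u u) (Cmult u u))))
           (Cplus (Cmult (RtoC (-1/8)) (Cmult u (Cmult (Cmult u u) (Cmult u u))))
                  (Cmult (Cminus (RtoC 1) u) r))).
  { unfold r, v. rewrite !RtoC_div by lra. field. }
  rewrite Eid. set (rho := Cmod u) in *.
  assert (0 <= rho) by (apply Cmod_ge_0).
  assert (Hv : Cmod v <= 5/4 * rho).
  { unfold v. eapply Rle_trans. apply Cmod_triangle. rewrite Cmod_div, Cmod_mult, Cmod_RtoC_pos by (try lra; intro E; inversion E; lra).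
    fold rho. nra. }
  assert (Hr : Cmod r <= 10 * Cmod v ^ 3). { apply cexp_rem. lra. }
  assert (Hv3 : Cmod v ^ 3 <= (5/4*rho)^3). { apply pow_incr. split; auto. apply Cmod_ge_0. }
  assert (H1u : Cmod (Cminus (RtoC 1) u) <= 3/2).
  { unfold Cminus. eapply Rle_trans. apply Cmod_triangle. rewrite Cmod_opp, Cmod_1. fold rho. lra. }
  eapply Rle_trans. apply Cmod_triangle. 
  eapply Rle_trans. apply Rplus_le_compat; apply Cmod_triangle.
  rewrite !Cmod_mult. fold rho. rewrite !Cmod_R.
  rewrite abs1, abs2, abs3.
  assert (H3 : 0 <= rho^3) by (apply pow_le; lra).
  assert (rho^4 <= rho^3/2) by (replace (rho^4) with (rho^3*rho) by ring; nra).
  assert (rho*rho <= 1/4) by nra.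
  assert (rho^5 <= rho^3/4) by (replace (rho^5) with (rho^3*(rho*rho)) by ring; nra).
  assert (Cmod (Cminus (RtoC 1) u) * Cmod r <= 3/2 * (10 * (5/4*rho)^3)).
  { apply Rmult_le_compat; try apply Cmod_ge_0; lra. }
  assert (E3: (5/4*rho)^3 = 125/64 * rho^3) by field.
  assert (E4: rho * (rho * rho) = rho^3) by ring.
  assert (E5: rho * rho * (rho * rho) = rho^4) by ring.
  assert (E6: rho * (rho * rho * (rho * rho)) = rho^5) by ring.
  lra.
Qed.

Definition rsumL (l : list R) : R := fold_right Rplus 0 l.

Lemma rsumL_bound {A} (f : A -> R) l B : (forall x, In x l -> f x <= B) ->
  rsumL (map f l) <= INR (length l) * B.
Proof.
  induction l; intros H; unfold rsumL in *; cbn [map length fold_right]. simpl; lra. rewrite S_INR.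
  assert (f a <= B) by (apply H; left; auto). assert (fold_right Rplus 0 (map f l) <= INR (length l) * B) by (apply IHl; intros; apply H; right; auto).
  lra.
Qed.

Lemma rsumL_nonneg {A} (f : A -> R) l : (forall x, 0 <= f x) -> 0 <= rsumL (map f l).
Proof. intros H; induction l; simpl; unfold rsumL in *; simpl. lra. pose proof (H a); lra. Qed.

Lemma cprod_close (l : list C) :
  Cmod (Cminus (cprod l) (RtoC 1)) <= exp (rsumL (map (fun c => Cmod (Cminus c (RtoC 1))) l)) - 1.
Proof.
  induction l; simpl.
  - unfold cprod; simpl. replace (Cminus (RtoC 1) (RtoC 1)) with (RtoC 0) by (apply Ceq; simpl; ring).
    rewrite Cmod_0, exp_0. lra.
  - unfold cprod, rsumL in *; simpl. set (P := fold_right Cmult (RtoC 1) l) in *.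
    set (S := fold_right Rplus 0 (map (fun c : C => Cmod (Cminus c (RtoC 1))) l)) in *.
    replace (Cminus (Cmult a P) (RtoC 1)) with (Cplus (Cmult (Cminus a (RtoC 1)) P) (Cminus P (RtoC 1))) by ring.
    eapply Rle_trans. apply Cmod_triangle. rewrite Cmod_mult.
    assert (HP : Cmod P <= exp S).
    { replace P with (Cplus (Cminus P (RtoC 1)) (RtoC 1)) by ring. eapply Rle_trans. apply Cmod_triangle. rewrite Cmod_1. lra. }
    set (x := Cmod (Cminus a (RtoC 1))). assert (0 <= x) by apply Cmod_ge_0.
    rewrite exp_plus. pose proof (exp_ineq1_le x). pose proof (exp_pos S).
    assert (x * Cmod P <= x * exp S) by (apply Rmult_le_compat_l; auto). nra.
Qed.

Lemma Cmod_cprod_le (l : list C) :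
  Cmod (cprod l) <= exp (rsumL (map (fun c => Cmod (Cminus c (RtoC 1))) l)).
Proof.
  pose proof (cprod_close l). replace (cprod l) with (Cplus (Cminus (cprod l) (RtoC 1)) (RtoC 1)) by ring.
  eapply Rle_trans. apply Cmod_triangle. rewrite Cmod_1. lra.
Qed.

Lemma csum_bound (l : list C) : Cmod (csum l) <= rsumL (map Cmod l).
Proof.
  induction l; unfold csum, rsumL in *; simpl. rewrite Cmod_0; lra.
  eapply Rle_trans. apply Cmod_triangle. lra.
Qed.

Definition Ccv (u : nat -> C) (L : C) :=
  is_lim_seq (fun n => Re (u n)) (Re L) /\ is_lim_seq (fun n => Im (u n)) (Im L).

Lemma inv_sq_le N : (1 <= N)%nat -> / (INR N + 1)^2 <= / INR N - / (INR N + 1).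
Proof.
  intros H. apply le_INR in H. simpl in H. assert (0 < INR N) by lra.
  replace (/ INR N - / (INR N + 1)) with (/ (INR N * (INR N + 1))) by (field; lra).
  apply Rinv_le_contravar. nra. simpl; nra.
Qed.

Lemma cauchy_gen (u : nat -> C) N0 B : (1 <= N0)%nat -> 0 <= B ->
  (forall N, (N0 <= N)%nat -> Cmod (Cminus (u (S N)) (u N)) <= B / (INR N + 1)^2) ->
  forall k N, (N0 <= N)%nat -> Cmod (Cminus (u (N + k)%nat) (u N)) <= B * (/ INR N - / INR (N + k)).
Proof.
  intros H1 HB H k. induction k; intros N HN.
  - rewrite Nat.add_0_r. replace (Cminus (u N) (u N)) with (RtoC 0) by ring. rewrite Cmod_0. lra.
  - replace (N + S k)%nat with (S (N + k)) by lia.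
    replace (Cminus (u (S (N + k))) (u N)) with (Cplus (Cminus (u (S (N+k))) (u (N+k)%nat)) (Cminus (u (N+k)%nat) (u N))) by ring.
    eapply Rle_trans. apply Cmod_triangle.
    pose proof (H (N+k)%nat ltac:(lia)). pose proof (IHk N HN).
    pose proof (inv_sq_le (N+k) ltac:(lia)). rewrite S_INR.
    assert (B / (INR (N + k) + 1) ^ 2 <= B * (/ INR (N + k) - / (INR (N + k) + 1))).
    { unfold Rdiv. apply Rmult_le_compat_l; auto. }
    lra.
Qed.

Lemma cv_of_cauchy (u : nat -> C) N0 B : (1 <= N0)%nat -> 0 <= B ->
  (forall N, (N0 <= N)%nat -> Cmod (Cminus (u (S N)) (u N)) <= B / (INR N + 1)^2) ->
  Ccv u (Clim u).
Proof.
  intros H1 HB H.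
  assert (K : forall n m, (N0 <= n)%nat -> (n <= m)%nat -> Cmod (Cminus (u m) (u n)) <= B / INR n).
  { intros n m Hn Hm. replace m with (n + (m - n))%nat by lia. eapply Rle_trans. apply (cauchy_gen u N0 B); auto.
    assert (0 < INR n) by (apply lt_0_INR; lia). assert (0 < INR (n + (m-n))) by (apply lt_0_INR; lia).
    pose proof (Rinv_0_lt_compat _ H2). unfold Rdiv. apply Rmult_le_compat_l; auto. lra. }
  assert (K2 : forall n m, (N0 <= n)%nat -> (N0 <= m)%nat -> Cmod (Cminus (u n) (u m)) <= B / INR (min n m)).
  { intros n m Hn Hm. destruct (le_lt_dec n m).
    - rewrite Nat.min_l by lia. rewrite <- Cmod_opp. replace (Copp (Cminus (u n) (u m))) with (Cminus (u m) (u n)) by ring. apply K; lia.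
    - rewrite Nat.min_r by lia. apply K; lia. }
  assert (CA : forall f : C -> R, (forall z, Rabs (f z) <= Cmod z) -> (forall a b, f (Cminus a b) = f a - f b) ->
     ex_finite_lim_seq (fun n => f (u n))).
  { intros f Hf Hl. apply ex_lim_seq_cauchy_corr. intros eps.
    destruct (archimed_cor1 (eps / (B + 1))) as [M [HM1 HM2]].
    { apply Rdiv_lt_0_compat. apply cond_pos. lra. }
    exists (Nat.max M N0). intros n m Hn Hm. rewrite <- Hl. eapply Rle_lt_trans. apply Hf.
    eapply Rle_lt_trans. apply K2; lia.
    assert (INR M <= INR (min n m)) by (apply le_INR; lia).
    assert (0 < INR M) by (apply lt_0_INR; lia).
    assert (/ INR (min n m) <= / INR M) by (apply Rinv_le_contravar; lra).
    pose proof (cond_pos eps).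
    assert (B * / INR M <= (B+1) * / INR M) by (apply Rmult_le_compat_r; [left; apply Rinv_0_lt_compat; lra|lra]).
    assert ((B+1) * / INR M < eps).
    { assert ((B+1) * / INR M < (B+1) * (eps/(B+1))) by (apply Rmult_lt_compat_l; lra).
      assert ((B+1)*(eps/(B+1)) = eps) by (field; lra). lra. }
    unfold Rdiv. assert (B * / INR (min n m) <= B * / INR M) by (apply Rmult_le_compat_l; lra). lra. }
  assert (ERe : ex_finite_lim_seq (fun n => Re (u n))).
  { apply CA. apply re_le_Cmod. intros; reflexivity. }
  assert (EIm : ex_finite_lim_seq (fun n => Im (u n))).
  { apply CA. apply im_le_Cmod. intros; reflexivity. }
  destruct ERe as [lr Hr]. destruct EIm as [li Hi].
  unfold Clim, Ccv. simpl. rewrite (is_lim_seq_unique _ _ Hr), (is_lim_seq_unique _ _ Hi). simpl. split; auto.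
Qed.

Lemma bounded_mult (u : nat -> C) N0 A : (1 <= N0)%nat -> 0 <= A ->
  (forall N, (N0 <= N)%nat -> Cmod (Cminus (u (S N)) (u N)) <= Cmod (u N) * (A / (INR N + 1)^2)) ->
  forall k, Cmod (u (N0 + k)%nat) <= Cmod (u N0) * exp (A * (/ INR N0 - / INR (N0 + k))).
Proof.
  intros H1 HA H k. induction k.
  - rewrite Nat.add_0_r, Rminus_diag, Rmult_0_r, exp_0. lra.
  - replace (N0 + S k)%nat with (S (N0 + k)) by lia.
    pose proof (H (N0 + k)%nat ltac:(lia)).
    assert (Cmod (u (S (N0 + k))) <= Cmod (u (N0+k)%nat) * (1 + A / (INR (N0+k) + 1)^2)).
    { replace (u (S (N0+k))) with (Cplus (Cminus (u (S (N0+k))) (u (N0+k)%nat)) (u (N0+k)%nat)) by ring.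
      eapply Rle_trans. apply Cmod_triangle. lra. }
    pose proof (exp_ineq1_le (A / (INR (N0 + k) + 1) ^ 2)).
    pose proof (inv_sq_le (N0+k) ltac:(lia)).
    assert (A / (INR (N0 + k) + 1) ^ 2 <= A * (/ INR (N0+k) - / (INR (N0+k) + 1))) by (unfold Rdiv; apply Rmult_le_compat_l; auto).
    rewrite S_INR.
    assert (exp (A * (/ INR N0 - / INR (N0 + k))) * exp (A / (INR (N0 + k) + 1) ^ 2)
            <= exp (A * (/ INR N0 - / (INR (N0 + k) + 1)))).
    { rewrite <- exp_plus. apply exp_le_3 || idtac. destruct (Req_dec (A * (/ INR N0 - / INR (N0 + k)) + A / (INR (N0 + k) + 1) ^ 2) (A * (/ INR N0 - / (INR (N0 + k) + 1)))) as [E|E].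
      rewrite E; lra. left. apply exp_increasing. lra. }
    pose proof (Cmod_ge_0 (u (N0 + k)%nat)). pose proof (Cmod_ge_0 (u N0)).
    assert (0 <= 1 + A / (INR (N0 + k) + 1) ^ 2).
    { assert (0 <= A / (INR (N0 + k) + 1) ^ 2). unfold Rdiv. apply Rmult_le_pos; auto. left; apply Rinv_0_lt_compat.
      apply pow_lt. pose proof (pos_INR (N0+k)); lra. lra. }
    eapply Rle_trans. apply H2. eapply Rle_trans. apply Rmult_le_compat_r. auto. apply IHk.
    rewrite Rmult_assoc. apply Rmult_le_compat_l; auto.
    eapply Rle_trans. apply Rmult_le_compat_l. left; apply exp_pos. apply H3. auto.
Qed.

Lemma cv_mult (u : nat -> C) N0 A : (1 <= N0)%nat -> 0 <= A ->
  (forall N, (N0 <= N)%nat -> Cmod (Cminus (u (S N)) (u N)) <= Cmod (u N) * (A / (INR N + 1)^2)) ->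
  Ccv u (Clim u).
Proof.
  intros H1 HA H. apply (cv_of_cauchy u N0 (Cmod (u N0) * exp A * A)); auto.
  apply Rmult_le_pos; auto. apply Rmult_le_pos. apply Cmod_ge_0. left; apply exp_pos.
  intros N HN. eapply Rle_trans. apply H; auto.
  replace N with (N0 + (N - N0))%nat at 1 by lia.
  pose proof (bounded_mult u N0 A H1 HA H (N - N0)).
  assert (exp (A * (/ INR N0 - / INR (N0 + (N - N0)))) <= exp A).
  { assert (0 < INR N0) by (apply lt_0_INR; lia). assert (0 < INR (N0 + (N - N0))) by (apply lt_0_INR; lia).
    assert (/ INR N0 <= 1). { rewrite <- Rinv_1. apply Rinv_le_contravar. lra. apply (le_INR 1); auto. }
    pose proof (Rinv_0_lt_compat _ H3).
    destruct (Req_dec (A * (/ INR N0 - / INR (N0 + (N - N0)))) A) as [E|E]. rewrite E; lra.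
    left; apply exp_increasing. assert (A * (/ INR N0 - / INR (N0 + (N - N0))) <= A * 1).
    apply Rmult_le_compat_l; lra. lra. }
  assert (0 <= A / (INR N + 1) ^ 2). { unfold Rdiv. apply Rmult_le_pos; auto. left; apply Rinv_0_lt_compat. apply pow_lt. pose proof (pos_INR N); lra. }
  unfold Rdiv. rewrite <- Rmult_assoc.
  apply Rmult_le_compat_r. left; apply Rinv_0_lt_compat. apply pow_lt. pose proof (pos_INR N); lra.
  apply Rmult_le_compat_r; auto. pose proof (Cmod_ge_0 (u N0)). nra.
Qed.

Lemma Ccv_ext u v L : (forall n, u n = v n) -> Ccv u L -> Ccv v L.
Proof. intros H [H1 H2]; split; eapply is_lim_seq_ext; eauto; intros; simpl; rewrite H; auto. Qed.

Lemma Ccv_const a : Ccv (fun _ => a) a.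
Proof. split; apply is_lim_seq_const. Qed.

Lemma Ccv_mult u v L M : Ccv u L -> Ccv v M -> Ccv (fun n => Cmult (u n) (v n)) (Cmult L M).
Proof.
  intros [H1 H2] [H3 H4]. split; simpl.
  - apply is_lim_seq_minus'; apply is_lim_seq_mult'; auto.
  - apply is_lim_seq_plus'; apply is_lim_seq_mult'; auto.
Qed.

Lemma Ccv_plus u v L M : Ccv u L -> Ccv v M -> Ccv (fun n => Cplus (u n) (v n)) (Cplus L M).
Proof. intros [H1 H2] [H3 H4]. split; simpl; apply is_lim_seq_plus'; auto. Qed.

Lemma Ccv_conj u L : Ccv u L -> Ccv (fun n => Cconj (u n)) (Cconj L).
Proof.
  intros [H1 H2]. split; simpl; auto.
  apply (is_lim_seq_opp _ (Im L)) in H2. exact H2.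
Qed.

Lemma Ccv_cexp u L : Ccv u L -> Ccv (fun n => cexp (u n)) (cexp L).
Proof.
  intros [H1 H2]. unfold cexp; split; simpl; apply is_lim_seq_mult'.
  - apply is_lim_seq_continuous; auto. apply derivable_continuous_pt, derivable_pt_exp.
  - apply is_lim_seq_continuous; auto. apply continuity_cos.
  - apply is_lim_seq_continuous; auto. apply derivable_continuous_pt, derivable_pt_exp.
  - apply is_lim_seq_continuous; auto. apply continuity_sin.
Qed.

Lemma Ccv_Clim u L : Ccv u L -> Clim u = L.
Proof.
  intros [H1 H2]. unfold Clim. rewrite (is_lim_seq_unique _ _ H1), (is_lim_seq_unique _ _ H2).
  destruct L; reflexivity.
Qed.

Lemma nat_above (x : R) : exists N : nat, x <= INR N.
Proof.
  destruct (archimed x) as [H1 H2]. exists (Z.to_nat (up x)).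
  destruct (Z_le_gt_dec 0 (up x)).
  - rewrite INR_IZR_INZ, Z2Nat.id by auto. lra.
  - pose proof (pos_INR (Z.to_nat (up x))). assert (IZR (up x) < 0) by (apply IZR_lt; lia). lra.
Qed.

Section Lat.
Variables (w t : R).
Hypothesis (Hw : 0 < w) (Ht : 0 < t).
Let W := RtoC w.
Let w' : C := (0, t).
Let c := Rmin w t.

Lemma c_pos : 0 < c.
Proof. unfold c, Rmin; destruct Rle_dec; lra. Qed.

Lemma lat_shell_bound N m n : In (m, n) (shell N) -> 2 * c * (INR N + 1) <= Cmod (lat W w' m n).
Proof.
  intros H. apply In_shell in H. unfold W, w'. rewrite lat_eq.
  assert (c <= w /\ c <= t) by (unfold c, Rmin; destruct Rle_dec; lra).
  pose proof c_pos.
  replace (INR N + 1) with (IZR (Z.of_nat (S N))) by (rewrite <- INR_IZR_INZ, S_INR; auto).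
  destruct H as [H|H]; apply IZR_le in H; rewrite abs_IZR in H.
  - pose proof (re_le_Cmod (2 * IZR m * w, 2 * IZR n * t)). simpl in H2.
    rewrite !Rabs_mult, (Rabs_pos_eq 2), (Rabs_pos_eq w) in H2 by lra.
    assert (IZR (Z.of_nat (S N)) * c <= Rabs (IZR m) * w).
    { apply Rmult_le_compat; try lra. apply IZR_le; lia. }
    lra.
  - pose proof (im_le_Cmod (2 * IZR m * w, 2 * IZR n * t)). simpl in H2.
    rewrite !Rabs_mult, (Rabs_pos_eq 2), (Rabs_pos_eq t) in H2 by lra.
    assert (IZR (Z.of_nat (S N)) * c <= Rabs (IZR n) * t).
    { apply Rmult_le_compat; try lra. apply IZR_le; lia. }
    lra.
Qed.

Lemma lat_nz m n : (m, n) <> (0%Z, 0%Z) -> lat W w' m n <> RtoC 0.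
Proof.
  intros H E. unfold W, w' in E. rewrite lat_eq in E. inversion E.
  apply H. assert (IZR m = 0) by nra. assert (IZR n = 0) by nra.
  apply eq_IZR in H0. apply eq_IZR in H3. subst; auto.
Qed.

Lemma lat_prod_S N f : lat_prod W w' (S N) f =
  Cmult (lat_prod W w' N f) (cprod (map (fun p => f (lat W w' (fst p) (snd p))) (shell N))).
Proof.
  unfold lat_prod. fold (idx (S N)). fold (idx N).
  change (fold_right Cmult (RtoC 1) ?l) with (cprod l).
  rewrite (perm_cprod _ _ (Permutation_map _ (perm_shell N))). rewrite map_app, cprod_app. auto.
Qed.

Lemma lat_sum_S N f : lat_sum W w' (S N) f =
  Cplus (lat_sum W w' N f) (csum (map (fun p => f (lat W w' (fst p) (snd p))) (shell N))).
Proof.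
  unfold lat_sum. fold (idx (S N)). fold (idx N).
  change (fold_right Cplus (RtoC 0) ?l) with (csum l).
  rewrite (perm_csum _ _ (Permutation_map _ (perm_shell N))). rewrite map_app, csum_app. auto.
Qed.

Lemma N0_exists (z : C) : exists N0, (1 <= N0)%nat /\ forall N, (N0 <= N)%nat -> Cmod z <= c * (INR N + 1).
Proof.
  destruct (nat_above (Cmod z / c)) as [M HM]. exists (S M). split. lia.
  intros N HN. apply le_INR in HN. rewrite S_INR in HN. pose proof c_pos.
  apply (Rmult_le_compat_r c) in HM; [|lra]. unfold Rdiv in HM. rewrite Rmult_assoc, Rinv_l, Rmult_1_r in HM by lra.
  nra.
Qed.

Lemma shell_ratio_bound (z : C) N : Cmod z <= c * (INR N + 1) -> forall m n, In (m, n) (shell N) ->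
  Cmod (Cdiv z (lat W w' m n)) <= Cmod z / (2 * c * (INR N + 1)) /\ Cmod (Cdiv z (lat W w' m n)) <= 1/2.
Proof.
  intros Hz m n Hin. pose proof (lat_shell_bound N m n Hin). pose proof c_pos. pose proof (pos_INR N).
  assert (Hnz : lat W w' m n <> RtoC 0).
  { apply lat_nz. unfold shell in Hin. apply filter_In in Hin. destruct Hin as [Hin _]. apply In_idx in Hin. tauto. }
  rewrite Cmod_div by auto.
  assert (0 < 2 * c * (INR N + 1)) by (apply Rmult_lt_0_compat; lra).
  assert (Cmod z / Cmod (lat W w' m n) <= Cmod z / (2 * c * (INR N + 1))).
  { unfold Rdiv. apply Rmult_le_compat_l. apply Cmod_ge_0. apply Rinv_le_contravar; lra. }
  split; auto. eapply Rle_trans; eauto. apply (Rmult_le_reg_r (2 * c * (INR N + 1))); auto.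
  unfold Rdiv. rewrite Rmult_assoc, Rinv_l by lra. lra.
Qed.

Lemma sigma_cv (z : C) : Ccv (fun N => lat_prod W w' N (Ef z)) (Clim (fun N => lat_prod W w' N (Ef z))).
Proof.
  destruct (N0_exists z) as [N0 [HN0 HN]]. pose proof c_pos.
  set (A' := 32 * Cmod z ^ 3 / c ^ 3). assert (0 <= A').
  { unfold A'. unfold Rdiv. apply Rmult_le_pos. pose proof (Cmod_ge_0 z). apply Rmult_le_pos. lra. apply pow_le; auto.
    left; apply Rinv_0_lt_compat, pow_lt; auto. }
  apply (cv_mult _ N0 (A' * exp A')); auto. apply Rmult_le_pos; auto. left; apply exp_pos.
  intros N HN1. rewrite lat_prod_S.
  set (P := lat_prod W w' N (Ef z)). set (Q := cprod _).
  replace (Cminus (Cmult P Q) P) with (Cmult P (Cminus Q (RtoC 1))) by ring.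
  rewrite Cmod_mult. apply Rmult_le_compat_l. apply Cmod_ge_0.
  eapply Rle_trans. apply cprod_close.
  set (x := rsumL _).
  assert (Hx : x <= A' / (INR N + 1)^2).
  { unfold x. rewrite map_map. eapply Rle_trans. apply (rsumL_bound _ _ (4 * Cmod z ^ 3 / (c^3 * (INR N + 1)^3))).
    - intros [m n] Hin. cbn [fst snd]. destruct (shell_ratio_bound z N (HN N HN1) m n Hin) as [B1 B2].
      eapply Rle_trans. apply Ef_bound; auto.
      { apply lat_nz. unfold shell in Hin. apply filter_In in Hin. destruct Hin as [Hin _]. apply In_idx in Hin. tauto. }
      assert (Cmod (Cdiv z (lat W w' m n)) ^ 3 <= (Cmod z / (2 * c * (INR N + 1))) ^ 3).
      { apply pow_incr. split; auto. apply Cmod_ge_0. }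
      assert (E3 : (Cmod z / (2 * c * (INR N + 1))) ^ 3 * 32 = 4 * Cmod z ^ 3 / (c ^ 3 * (INR N + 1) ^ 3)).
      { field. pose proof (pos_INR N). split; lra. }
      lra.
    - rewrite length_shell. rewrite mult_INR, plus_INR. simpl (INR 8). simpl (INR 1).
      unfold A'. pose proof (pos_INR N). right. field. split; lra. }
  assert (0 <= x). { unfold x. apply rsumL_nonneg. intros; apply Cmod_ge_0. }
  assert (HxA : x <= A').
  { eapply Rle_trans. apply Hx. unfold Rdiv. rewrite <- (Rmult_1_r A') at 2. apply Rmult_le_compat_l; auto.
    rewrite <- Rinv_1. apply Rinv_le_contravar. lra. pose proof (pos_INR N). simpl. nra. }
  assert (exp x - 1 <= x * exp x).
  { pose proof (exp_ineq1_le (-x)) as Hm. rewrite exp_Ropp in Hm. pose proof (exp_pos x).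
    apply (Rmult_le_compat_r (exp x)) in Hm; [|lra]. rewrite Rmult_plus_distr_r, Rinv_l in Hm by lra. nra. }
  assert (exp x <= exp A') by (destruct (Req_dec x A') as [E|E]; [rewrite E; lra| left; apply exp_increasing; lra]).
  assert (x * exp x <= A' / (INR N + 1)^2 * exp A') by (apply Rmult_le_compat; auto; left; apply exp_pos).
  replace (A' * exp A' / (INR N + 1) ^ 2) with (A' / (INR N + 1) ^ 2 * exp A') by (field; pose proof (pos_INR N); lra).
  lra.
Qed.

Definition gz (z O : C) : C := Cplus (Cplus (Cinv (Cminus z O)) (Cinv O)) (Cdiv z (Cmult O O)).

Lemma gz_bound z O : O <> RtoC 0 -> 2 * Cmod z <= Cmod O -> Cmod (gz z O) <= 2 * Cmod z ^ 2 / Cmod O ^ 3.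
Proof.
  intros HO Hz. assert (Hzo : Cminus z O <> RtoC 0).
  { intro E. assert (z = O) by (apply Ceq_minus; auto). subst. pose proof (Cmod_gt_0 O). pose proof (proj1 H HO). lra. }
  assert (E : gz z O = Cdiv (Cmult z z) (Cmult (Cmult O O) (Cminus z O))).
  { unfold gz. field. auto. }
  rewrite E, Cmod_div, !Cmod_mult. 2: repeat apply Cmult_neq_0; auto.
  assert (0 < Cmod O) by (apply Cmod_gt_0; auto).
  assert (Cmod O / 2 <= Cmod (Cminus z O)).
  { pose proof (Cmod_triangle (Cminus z O) O). replace (Cplus (Cminus z O) O) with z in H0 by ring.
    rewrite <- (Cmod_opp (Cminus z O)). replace (Copp (Cminus z O)) with (Cminus O z) by ring.
    pose proof (Cmod_triangle (Cminus O z) z). replace (Cplus (Cminus O z) z) with O in H1 by ring. lra. }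
  unfold Rdiv. replace (Cmod z ^ 2) with (Cmod z * Cmod z) by ring.
  assert (0 < Cmod (Cminus z O)) by lra.
  apply Rmult_le_reg_r with (Cmod O * Cmod O * Cmod (Cminus z O)). repeat apply Rmult_lt_0_compat; lra.
  rewrite Rmult_assoc, Rinv_l by (apply Rgt_not_eq; repeat apply Rmult_lt_0_compat; lra).
  replace (2 * (Cmod z * Cmod z) * / Cmod O ^ 3 * (Cmod O * Cmod O * Cmod (Cminus z O)))
    with (2 * (Cmod z * Cmod z) * (Cmod (Cminus z O) / Cmod O)) by (field; lra).
  assert (1/2 <= Cmod (Cminus z O) / Cmod O).
  { apply (Rmult_le_reg_r (Cmod O)); auto.
    replace (Cmod (Cminus z O) / Cmod O * Cmod O) with (Cmod (Cminus z O)) by (field; lra). lra. }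
  pose proof (Cmod_ge_0 z). nra.
Qed.

Lemma zeta_cv (z : C) : Ccv (fun N => lat_sum W w' N (gz z)) (Clim (fun N => lat_sum W w' N (gz z))).
Proof.
  destruct (N0_exists z) as [N0 [HN0 HN]]. pose proof c_pos.
  apply (cv_of_cauchy _ N0 (2 * Cmod z ^ 2 / c ^ 3)); auto.
  { unfold Rdiv. apply Rmult_le_pos. pose proof (Cmod_ge_0 z). apply Rmult_le_pos. lra. apply pow_le; auto.
    left; apply Rinv_0_lt_compat, pow_lt; auto. }
  intros N HN1. rewrite lat_sum_S.
  replace (Cminus (Cplus (lat_sum W w' N (gz z)) (csum _)) (lat_sum W w' N (gz z))) with
    (csum (map (fun p => gz z (lat W w' (fst p) (snd p))) (shell N))) by ring.
  eapply Rle_trans. apply csum_bound. rewrite map_map.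
  eapply Rle_trans. apply (rsumL_bound _ _ (Cmod z ^ 2 / (4 * c^3 * (INR N + 1)^3))).
  - intros [m n] Hin. cbn [fst snd]. pose proof (lat_shell_bound N m n Hin).
    assert (Hnz : lat W w' m n <> RtoC 0).
    { apply lat_nz. unfold shell in Hin. apply filter_In in Hin. destruct Hin as [Hin _]. apply In_idx in Hin. tauto. }
    pose proof (HN N HN1). pose proof (pos_INR N).
    eapply Rle_trans. apply gz_bound; auto. lra.
    assert (0 < 2 * c * (INR N + 1)) by (apply Rmult_lt_0_compat; lra).
    assert ((2 * c * (INR N + 1))^3 <= Cmod (lat W w' m n) ^ 3) by (apply pow_incr; lra).
    assert (0 < (2 * c * (INR N + 1))^3) by (apply pow_lt; lra).
    unfold Rdiv. replace (/ (4 * c ^ 3 * (INR N + 1) ^ 3)) with (2 * / (2 * c * (INR N + 1))^3) by (field; lra).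
    pose proof (Cmod_ge_0 z). assert (0 <= Cmod z ^2) by (apply pow_le; auto).
    assert (/ Cmod (lat W w' m n) ^ 3 <= / (2 * c * (INR N + 1)) ^ 3) by (apply Rinv_le_contravar; lra).
    nra.
  - rewrite length_shell. rewrite mult_INR, plus_INR. simpl (INR 8). simpl (INR 1).
    pose proof (pos_INR N). right. field. split; lra.
Qed.

End Lat.

Lemma cprod_conj l : Cconj (cprod l) = cprod (map Cconj l).
Proof. induction l; unfold cprod in *; simpl. apply Cconj_RtoC. rewrite Cmult_conj, IHl; auto. Qed.
Lemma csum_conj l : Cconj (csum l) = csum (map Cconj l).
Proof. induction l; unfold csum in *; simpl. apply Cconj_RtoC. rewrite Cplus_conj, IHl; auto. Qed.

Lemma Ef_conj z O : Cconj (Ef z O) = Ef (Cconj z) (Cconj O).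
Proof.
  unfold Ef. rewrite Cmult_conj, Cminus_conj, Cconj_RtoC, cexp_conj, Cplus_conj, !Cconj_div, !Cmult_conj, Cconj_RtoC.
  reflexivity.
Qed.

Lemma gz_conj z O : Cconj (gz z O) = gz (Cconj z) (Cconj O).
Proof.
  unfold gz. rewrite !Cplus_conj, !Cconj_inv, Cminus_conj, Cconj_div, Cmult_conj. reflexivity.
Qed.

Section Sym.
Variables (w t : R).
Let W := RtoC w.
Let w' : C := (0, t).

Lemma lat_conj m n : Cconj (lat W w' m n) = lat W w' m (- n).
Proof. unfold W, w'. rewrite !lat_eq. apply Ceq; simpl; rewrite ?opp_IZR; ring. Qed.

Lemma lat_prod_ext N f g : (forall O, f O = g O) -> lat_prod W w' N f = lat_prod W w' N g.
Proof. intros H. unfold lat_prod. f_equal. apply map_ext. auto. Qed.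
Lemma lat_sum_ext N f g : (forall O, f O = g O) -> lat_sum W w' N f = lat_sum W w' N g.
Proof. intros H. unfold lat_sum. f_equal. apply map_ext. auto. Qed.

Let s1 (p : Z * Z) := (fst p, (- snd p)%Z).

Lemma perm_s1 N : Permutation (idx N) (map s1 (idx N)).
Proof.
  apply perm_idx_sym. intros [m n]; unfold s1; simpl; f_equal; lia.
  intros [m n]; unfold inbox, s1; simpl; lia. reflexivity.
Qed.

Lemma lat_prod_conj N f : Cconj (lat_prod W w' N f) = lat_prod W w' N (fun O => Cconj (f (Cconj O))).
Proof.
  unfold lat_prod. fold (idx N). change (fold_right Cmult (RtoC 1) ?l) with (cprod l).
  rewrite cprod_conj, map_map. rewrite (perm_cprod _ _ (Permutation_map _ (perm_s1 N))).
  rewrite map_map. f_equal. apply map_ext. intros [m n]. unfold s1; simpl.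
  rewrite lat_conj. reflexivity.
Qed.

Lemma lat_sum_conj N f : Cconj (lat_sum W w' N f) = lat_sum W w' N (fun O => Cconj (f (Cconj O))).
Proof.
  unfold lat_sum. fold (idx N). change (fold_right Cplus (RtoC 0) ?l) with (csum l).
  rewrite csum_conj, map_map. rewrite (perm_csum _ _ (Permutation_map _ (perm_s1 N))).
  rewrite map_map. f_equal. apply map_ext. intros [m n]. unfold s1; simpl.
  rewrite lat_conj. reflexivity.
Qed.

Lemma sigN_conj N z : Cconj (lat_prod W w' N (Ef z)) = lat_prod W w' N (Ef (Cconj z)).
Proof. rewrite lat_prod_conj. apply lat_prod_ext. intros O. rewrite Ef_conj, Cconj_conj. auto. Qed.

Lemma zetaN_conj N z : Cconj (lat_sum W w' N (gz z)) = lat_sum W w' N (gz (Cconj z)).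
Proof. rewrite lat_sum_conj. apply lat_sum_ext. intros O. rewrite gz_conj, Cconj_conj. auto. Qed.

Lemma real_of_conj z : Cconj z = z -> Im z = 0.
Proof. destruct z; unfold Cconj; simpl. intros H; inversion H; lra. Qed.

Lemma Im_Clim_0 u : (forall n, Im (u n) = 0) -> Im (Clim u) = 0.
Proof.
  intros H. unfold Clim; simpl. rewrite (Lim_seq_ext _ (fun _ => 0)) by auto. rewrite Lim_seq_const. auto.
Qed.

Lemma wsigma_real k : Im (wsigma W w' (RtoC k)) = 0.
Proof.
  unfold wsigma. change (fun O => Cmult (Cminus (RtoC 1) (Cdiv (RtoC k) O))
           (cexp (Cplus (Cdiv (RtoC k) O) (Cdiv (Cmult (RtoC k) (RtoC k)) (Cmult (RtoC 2) (Cmult O O))))))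
    with (Ef (RtoC k)).
  rewrite im_mult. rewrite Im_Clim_0. simpl; ring.
  intros n. apply real_of_conj. rewrite sigN_conj, Cconj_RtoC. auto.
Qed.

Lemma wzeta_real k : Im (wzeta W w' (RtoC k)) = 0.
Proof.
  unfold wzeta. change (fun O => Cplus (Cplus (Cinv (Cminus (RtoC k) O)) (Cinv O)) (Cdiv (RtoC k) (Cmult O O)))
    with (gz (RtoC k)).
  rewrite im_plus. rewrite Im_Clim_0. unfold Cinv; simpl. unfold Rdiv; ring.
  intros n. apply real_of_conj. rewrite zetaN_conj, Cconj_RtoC. auto.
Qed.

End Sym.

Lemma cprod_map_mult {A} (f g : A -> C) l :
  cprod (map (fun x => Cmult (f x) (g x)) l) = Cmult (cprod (map f l)) (cprod (map g l)).
Proof. induction l; unfold cprod in *; simpl. ring. rewrite IHl. ring. Qed.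

Lemma cprod_map_ext {A} (f g : A -> C) l : (forall x, In x l -> f x = g x) -> cprod (map f l) = cprod (map g l).
Proof. intros H. f_equal. apply map_ext_in. auto. Qed.

Lemma csum_map_scal {A} c (f : A -> C) l : csum (map (fun x => Cmult c (f x)) l) = Cmult c (csum (map f l)).
Proof. induction l; unfold csum in *; simpl. ring. rewrite IHl. ring. Qed.

Lemma Im_csum l : Im (csum l) = rsumL (map Im l).
Proof. induction l; unfold csum, rsumL in *; simpl. auto. rewrite <- IHl. auto. Qed.
Lemma Re_csum l : Re (csum l) = rsumL (map Re l).
Proof. induction l; unfold csum, rsumL in *; simpl. auto. rewrite <- IHl. auto. Qed.

Lemma cprod_RtoC_pos {A} (r : A -> R) l : (forall x, 0 < r x) -> exists rho, 0 < rho /\ cprod (map (fun x => RtoC (r x)) l) = RtoC rho.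
Proof.
  intros H. induction l; unfold cprod in *; simpl. exists 1; split; auto; lra.
  destruct IHl as [rho [H1 H2]]. rewrite H2. exists (r a * rho). split. pose proof (H a); nra.
  apply Ceq; simpl; ring.
Qed.

Lemma cprod_cexp_im {A} (b : A -> R) l : cprod (map (fun x => cexp (0, b x)) l) = cexp (0, rsumL (map b l)).
Proof.
  induction l; unfold cprod, rsumL in *; simpl. rewrite <- cexp_0. f_equal.
  rewrite IHl, <- cexp_add. f_equal. apply Ceq; simpl; ring.
Qed.

Lemma Cmod_cprod_1 l : (forall x, In x l -> Cmod x = 1) -> Cmod (cprod l) = 1.
Proof.
  induction l; unfold cprod in *; simpl; intros H. apply Cmod_1.
  rewrite Cmod_mult, IHl, H; auto. ring.
Qed.

Lemma cprod_tele (c : nat -> C) L : (forall j, (j <= L)%nat -> c j <> RtoC 0) ->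
  cprod (map (fun j => Cdiv (c j) (c (S j))) (seq 0 L)) = Cdiv (c 0%nat) (c L).
Proof.
  induction L; intros H. unfold cprod; simpl. field. apply H; lia.
  rewrite seq_S, map_app, cprod_app, IHL by (intros; apply H; lia). unfold cprod; simpl.
  field. split; apply H; lia.
Qed.

Lemma rsumL_app l1 l2 : rsumL (l1 ++ l2) = rsumL l1 + rsumL l2.
Proof. induction l1; unfold rsumL in *; simpl. ring. rewrite IHl1. ring. Qed.

Lemma rsum_seq_S (f : nat -> R) L : rsumL (map f (seq 0 (S L))) = rsumL (map f (seq 0 L)) + f L.
Proof.
  rewrite seq_S, map_app, rsumL_app. unfold rsumL; simpl. ring.
Qed.

Lemma rsum_seq_first (f : nat -> R) L : rsumL (map f (seq 0 (S L))) = f 0%nat + rsumL (map (fun j => f (S j)) (seq 0 L)).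
Proof. simpl. rewrite <- seq_shift, map_map. reflexivity. Qed.

Definition symsum (f : R -> R) (N : nat) : R :=
  rsumL (map (fun j => f (INR j - INR N)) (seq 0 (2 * N + 1))).

Lemma symsum_S f N : symsum f (S N) = f (- (INR N + 1)) + symsum f N + f (INR N + 1).
Proof.
  unfold symsum. replace (2 * S N + 1)%nat with (S (S (2 * N + 1))) by lia.
  rewrite rsum_seq_first, rsum_seq_S.
  replace (INR 0 - INR (S N)) with (- (INR N + 1)) by (rewrite S_INR; simpl; ring).
  replace (INR (S (2 * N + 1)) - INR (S N)) with (INR N + 1) by (rewrite !S_INR, plus_INR, mult_INR; simpl; ring).
  rewrite (map_ext (fun j => f (INR (S j) - INR (S N))) (fun j => f (INR j - INR N))).
  ring. intros j. f_equal. rewrite !S_INR. ring.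
Qed.

Lemma symsum_odd f : (forall s, f (- s) = - f s) -> forall N, symsum f N = 0.
Proof.
  intros Hf N. induction N.
  - unfold symsum, rsumL; simpl. replace (0 - 0) with (- 0) by ring. pose proof (Hf 0). rewrite Ropp_0 in *. lra.
  - rewrite symsum_S, IHN, Hf. ring.
Qed.

Lemma symsum_shift q : (forall s, q (- s) = - q s) -> forall N,
  symsum (fun s => q (1 - 2 * s)) N = q (2 * INR N + 1).
Proof.
  intros Hq N. induction N.
  - unfold symsum, rsumL; simpl. rewrite Rplus_0_r. f_equal. ring.
  - rewrite symsum_S, IHN. rewrite S_INR.
    replace (1 - 2 * (INR N + 1)) with (- (2 * INR N + 1)) by ring. rewrite Hq.
    replace (1 - 2 * - (INR N + 1)) with (2 * (INR N + 1) + 1) by ring. ring.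
Qed.

Lemma RtoC2_nz : RtoC 2 <> RtoC 0.
Proof. intro E; inversion E; lra. Qed.

Lemma C_nz_im (z : C) : Im z <> 0 -> z <> RtoC 0.
Proof. intros H E. rewrite E in H. simpl in H. lra. Qed.

Lemma odd_nz n : 2 * IZR n + 1 <> 0 /\ 2 * IZR n - 1 <> 0.
Proof.
  split; intro E.
  - assert (IZR (2 * n + 1) = 0) by (rewrite plus_IZR, mult_IZR; simpl; lra). apply eq_IZR in H. lia.
  - assert (IZR (2 * n - 1) = 0) by (rewrite minus_IZR, mult_IZR; simpl; lra). apply eq_IZR in H. lia.
Qed.

Definition Jf (w' : C) (kk : C) (z1 z2c y1 x1 : C) (O : C) : C :=
  Cmult (Cdiv (Cmult (Cminus O z1) (Cminus O z2c)) (Cmult (Cminus O y1) (Cminus O x1)))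
        (cexp (Cmult kk (Cplus (Cinv (Cminus w' O)) (Cinv O)))).

Lemma perO (w' X Y kk O : C) :
  O <> RtoC 0 -> Cminus O (Cminus Y w') <> RtoC 0 -> Cminus O (Cplus X w') <> RtoC 0 ->
  Cminus w' O <> RtoC 0 ->
  kk = Cmult (RtoC (-2)) (Cminus Y X) ->
  Cmult (Cmult (Ef (Cplus Y w') O) (Ef (Cminus X w') O)) (cexp (Cmult kk (gz w' O))) =
  Cmult (Cmult (Ef (Cminus Y w') O) (Ef (Cplus X w') O))
        (Jf w' kk (Cplus Y w') (Cminus X w') (Cminus Y w') (Cplus X w') O).
Proof.
  intros HO H1 H2 H3 Hk. unfold Ef, Jf, gz.
  set (e := fun z => Cplus (Cdiv z O) (Cdiv (Cmult z z) (Cmult (RtoC 2) (Cmult O O)))).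
  change (Cplus (Cdiv (Cplus Y w') O) (Cdiv (Cmult (Cplus Y w') (Cplus Y w')) (Cmult (RtoC 2) (Cmult O O)))) with (e (Cplus Y w')).
  change (Cplus (Cdiv (Cminus X w') O) (Cdiv (Cmult (Cminus X w') (Cminus X w')) (Cmult (RtoC 2) (Cmult O O)))) with (e (Cminus X w')).
  change (Cplus (Cdiv (Cminus Y w') O) (Cdiv (Cmult (Cminus Y w') (Cminus Y w')) (Cmult (RtoC 2) (Cmult O O)))) with (e (Cminus Y w')).
  change (Cplus (Cdiv (Cplus X w') O) (Cdiv (Cmult (Cplus X w') (Cplus X w')) (Cmult (RtoC 2) (Cmult O O)))) with (e (Cplus X w')).
  assert (Hexp : Cmult (Cmult (cexp (e (Cplus Y w'))) (cexp (e (Cminus X w'))))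
     (cexp (Cmult kk (Cplus (Cplus (Cinv (Cminus w' O)) (Cinv O)) (Cdiv w' (Cmult O O))))) =
     Cmult (Cmult (cexp (e (Cminus Y w'))) (cexp (e (Cplus X w'))))
     (cexp (Cmult kk (Cplus (Cinv (Cminus w' O)) (Cinv O))))).
  { rewrite <- !cexp_add. f_equal. unfold e. rewrite Hk. field. auto. }
  set (A1 := cexp (e (Cplus Y w'))) in *. set (A2 := cexp (e (Cminus X w'))) in *.
  set (A3 := cexp (e (Cminus Y w'))) in *. set (A4 := cexp (e (Cplus X w'))) in *.
  set (A5 := cexp (Cmult kk (Cplus (Cplus (Cinv (Cminus w' O)) (Cinv O)) (Cdiv w' (Cmult O O))))) in *.
  set (A6 := cexp (Cmult kk (Cplus (Cinv (Cminus w' O)) (Cinv O)))) in *.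
  transitivity (Cmult (Cmult (Cminus (RtoC 1) (Cdiv (Cplus Y w') O)) (Cminus (RtoC 1) (Cdiv (Cminus X w') O)))
                (Cmult (Cmult A1 A2) A5)). ring.
  rewrite Hexp. field. auto.
Qed.

Definition sN (w t : R) (z : C) (N : nat) : C := Cmult z (lat_prod (RtoC w) (0, t) N (Ef z)).
Definition ZN (w t : R) (N : nat) : C := Cplus (Cinv (0, t)) (lat_sum (RtoC w) (0, t) N (gz (0, t))).

Section Ident.
Variables (w t x K : R).
Hypothesis (Hw : 0 < w) (Ht : 0 < t).
Let W := RtoC w.
Let w' : C := (0, t).
Let X := RtoC x.
Let Y := Cplus (RtoC x) (RtoC K).
Let kk := Cmult (RtoC (-2)) (Cminus Y X).
Let J := Jf w' kk (Cplus Y w') (Cminus X w') (Cminus Y w') (Cplus X w').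

Lemma lat_im m n : Im (lat W w' m n) = 2 * IZR n * t.
Proof. unfold W, w'. rewrite lat_eq. reflexivity. Qed.

Lemma nz_conds m n : (m, n) <> (0%Z, 0%Z) ->
  let O := lat W w' m n in
  O <> RtoC 0 /\ Cminus O (Cminus Y w') <> RtoC 0 /\ Cminus O (Cplus X w') <> RtoC 0 /\ Cminus w' O <> RtoC 0.
Proof.
  intros Hmn O. destruct (odd_nz n) as [H1 H2].
  split; [apply lat_nz; auto|]. 
  split; [|split]; apply C_nz_im; unfold O; simpl Im; rewrite ?im_plus, ?lat_im; simpl; intro E.
  - apply H1. apply (Rmult_eq_reg_r t); lra.
  - apply H2. apply (Rmult_eq_reg_r t); lra.
  - apply H2. apply (Rmult_eq_reg_r t); lra.
Qed.

Lemma cexp_latsum N : cexp (Cmult kk (lat_sum W w' N (gz w'))) =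
   cprod (map (fun p => cexp (Cmult kk (gz w' (lat W w' (fst p) (snd p))))) (idx N)).
Proof.
  unfold lat_sum. fold (idx N). change (fold_right Cplus (RtoC 0) ?l) with (csum l).
  rewrite <- csum_map_scal, cexp_csum, map_map. reflexivity.
Qed.

Lemma key_ident N :
  Cmult (Cmult (sN w t (Cplus Y w') N) (sN w t (Cminus X w') N)) (cexp (Cmult kk (ZN w t N))) =
  Cmult (Cmult (sN w t (Cminus Y w') N) (sN w t (Cplus X w') N))
        (cprod (map (fun p => J (lat W w' (fst p) (snd p))) (sq_idx N))).
Proof.
  unfold sN, ZN. fold W w'.
  rewrite Cmult_plus_distr_l, cexp_add, cexp_latsum, cprod_sq_idx.
  change (lat_prod W w' N ?f) with (cprod (map (fun p => f (lat W w' (fst p) (snd p))) (idx N))).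
  set (L := idx N).
  assert (HL : cprod (map (fun p => Cmult (Cmult (Ef (Cplus Y w') (lat W w' (fst p) (snd p)))
                                                (Ef (Cminus X w') (lat W w' (fst p) (snd p))))
                                         (cexp (Cmult kk (gz w' (lat W w' (fst p) (snd p)))))) L)
           = cprod (map (fun p => Cmult (Cmult (Ef (Cminus Y w') (lat W w' (fst p) (snd p)))
                                                (Ef (Cplus X w') (lat W w' (fst p) (snd p))))
                                         (J (lat W w' (fst p) (snd p)))) L)).
  { apply cprod_map_ext. intros [m n] Hin. unfold L in Hin. apply In_idx in Hin. destruct Hin as [_ Hnz].
    destruct (nz_conds m n Hnz) as [A1 [A2 [A3 A4]]]. simpl fst; simpl snd.
    apply perO; auto. }
  rewrite !cprod_map_mult in HL.
  assert (E0 : lat W w' 0 0 = RtoC 0) by (unfold W, w'; rewrite lat_eq; apply Ceq; simpl; ring).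
  simpl fst; simpl snd. rewrite E0.
  assert (HY : Cminus Y w' <> RtoC 0) by (apply C_nz_im; simpl; lra).
  assert (HX : Cplus X w' <> RtoC 0) by (apply C_nz_im; simpl; lra).
  assert (Hw' : w' <> RtoC 0) by (apply C_nz_im; simpl; lra).
  assert (HJ0 : J (RtoC 0) = Cmult (Cdiv (Cmult (Cplus Y w') (Cminus X w')) (Cmult (Cminus Y w') (Cplus X w')))
                                   (cexp (Cmult kk (Cinv w')))).
  { unfold J, Jf. rewrite Cinv_0. f_equal. field. auto. f_equal. f_equal.
    replace (Cminus w' (RtoC 0)) with w' by ring. ring. }
  rewrite HJ0.
  set (P1 := cprod (map (fun x0 => Ef (Cplus Y w') (lat W w' (fst x0) (snd x0))) L)) in *.
  set (P2 := cprod (map (fun x0 => Ef (Cminus X w') (lat W w' (fst x0) (snd x0))) L)) in *.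
  set (P3 := cprod (map (fun x0 => Ef (Cminus Y w') (lat W w' (fst x0) (snd x0))) L)) in *.
  set (P4 := cprod (map (fun x0 => Ef (Cplus X w') (lat W w' (fst x0) (snd x0))) L)) in *.
  set (P5 := cprod (map (fun x0 => cexp (Cmult kk (gz w' (lat W w' (fst x0) (snd x0))))) L)) in *.
  set (P6 := cprod (map (fun x0 => J (lat W w' (fst x0) (snd x0))) L)) in *.
  set (E := cexp (Cmult kk (Cinv w'))).
  transitivity (Cmult (Cmult (Cmult (Cplus Y w') (Cminus X w')) E) (Cmult (Cmult P1 P2) P5)). ring.
  rewrite HL. field. auto.
Qed.

End Ident.

Lemma Im_Cinv p q : Im (Cinv (p, q)) = - q / (p * p + q * q).
Proof. simpl. replace (p * (p * 1) + q * (q * 1)) with (p * p + q * q) by ring. auto. Qed.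
Lemma Re_Cinv p q : Re (Cinv (p, q)) = p / (p * p + q * q).
Proof. simpl. replace (p * (p * 1) + q * (q * 1)) with (p * p + q * q) by ring. auto. Qed.

Lemma rsumL_plus {A} (f g : A -> R) l : rsumL (map (fun x => f x + g x) l) = rsumL (map f l) + rsumL (map g l).
Proof. induction l; unfold rsumL in *; simpl. ring. rewrite IHl. ring. Qed.
Lemma rsumL_scal {A} c (f : A -> R) l : rsumL (map (fun x => c * f x) l) = c * rsumL (map f l).
Proof. induction l; unfold rsumL in *; simpl. ring. rewrite IHl. ring. Qed.

Lemma IZR_sub_nat j N : IZR (Z.of_nat j - Z.of_nat N) = INR j - INR N.
Proof. rewrite minus_IZR, <- !INR_IZR_INZ. auto. Qed.

Definition fa (x K T a : R) : C :=
  Cmult (Cmult (Cdiv (a - (x + K), - T) (a - (x + K), T)) (Cdiv (a - x, T) (a - x, - T)))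
        (cexp (0, 2 * K * T / (a ^ 2 + T ^ 2))).

Section PerI.
Variables (w t x K : R).
Hypothesis (Hw : 0 < w) (Ht : 0 < t).
Let W := RtoC w.
Let w' : C := (0, t).
Let X := RtoC x.
Let Y := Cplus (RtoC x) (RtoC K).
Let kk := Cmult (RtoC (-2)) (Cminus Y X).
Let J := Jf w' kk (Cplus Y w') (Cminus X w') (Cminus Y w') (Cplus X w').

Lemma per_i (N : nat) (m : Z) : exists rho, 0 < rho /\
  cprod (map (fun j => J (lat W w' m (Z.of_nat j - Z.of_nat N))) (seq 0 (2 * N + 1))) =
  Cmult (RtoC rho) (fa x K ((2 * INR N + 1) * t) (2 * IZR m * w)).
Proof.
  set (a := 2 * IZR m * w). set (T := (2 * INR N + 1) * t).
  set (cy := fun j : nat => (a - (x + K), t * (2 * (INR j - INR N) - 1)) : C).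
  set (cx := fun j : nat => (a - x, t * (2 * (INR j - INR N) - 1)) : C).
  set (g := fun j : nat => Cplus (Cinv (Cminus w' (lat W w' m (Z.of_nat j - Z.of_nat N))))
                                 (Cinv (lat W w' m (Z.of_nat j - Z.of_nat N)))).
  assert (Hcy : forall j, cy j <> RtoC 0).
  { intros j. apply C_nz_im. unfold cy; simpl. destruct (odd_nz (Z.of_nat j - Z.of_nat N)) as [_ H2].
    rewrite IZR_sub_nat in H2. intro E. apply H2. apply (Rmult_eq_reg_l t); lra. }
  assert (Hcx : forall j, cx j <> RtoC 0).
  { intros j. apply C_nz_im. unfold cx; simpl. destruct (odd_nz (Z.of_nat j - Z.of_nat N)) as [_ H2].
    rewrite IZR_sub_nat in H2. intro E. apply H2. apply (Rmult_eq_reg_l t); lra. }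
  assert (HJ : forall j, J (lat W w' m (Z.of_nat j - Z.of_nat N)) =
     Cmult (RtoC (exp (-2 * K * Re (g j))))
       (Cmult (Cmult (Cdiv (cy j) (cy (S j))) (Cdiv (Cinv (cx j)) (Cinv (cx (S j)))))
              (cexp (0, -2 * K * Im (g j))))).
  { intros j. unfold J, Jf. fold (g j).
    assert (Ekk : Cmult kk (g j) = (-2 * K * Re (g j), -2 * K * Im (g j))).
    { unfold kk, Y, X. destruct (g j) as [g1 g2]. apply Ceq; simpl; ring. }
    rewrite Ekk, cexp_split.
    unfold W, w'. rewrite lat_eq. rewrite IZR_sub_nat.
    assert (E1 : Cminus (a, 2 * (INR j - INR N) * t) (Cplus Y (0, t)) = cy j) by (unfold Y, cy; apply Ceq; simpl; ring).
    assert (E2 : Cminus (a, 2 * (INR j - INR N) * t) (Cminus X (0, t)) = cx (S j)) by (unfold X, cx; rewrite S_INR; apply Ceq; simpl; ring).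
    assert (E3 : Cminus (a, 2 * (INR j - INR N) * t) (Cminus Y (0, t)) = cy (S j)) by (unfold Y, cy; rewrite S_INR; apply Ceq; simpl; ring).
    assert (E4 : Cminus (a, 2 * (INR j - INR N) * t) (Cplus X (0, t)) = cx j) by (unfold X, cx; apply Ceq; simpl; ring).
    unfold a in E1, E2, E3, E4. rewrite E1, E2, E3, E4.
    field. repeat split; auto. }
  rewrite (map_ext _ _ HJ).
  rewrite !cprod_map_mult.
  destruct (cprod_RtoC_pos (fun j => exp (-2 * K * Re (g j))) (seq 0 (2 * N + 1))) as [rho [Hr Er]].
  { intros; apply exp_pos. }
  exists rho. split; auto. rewrite Er. f_equal.
  rewrite (cprod_tele cy) by auto.
  rewrite (cprod_tele (fun j => Cinv (cx j))).
  2: { intros j _ E. pose proof (Cinv_r (cx j) (Hcx j)) as H. rewrite E, Cmult_0_r in H. apply C1_nz. auto. }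
  rewrite cprod_cexp_im.
  unfold fa. f_equal. f_equal.
  - f_equal; unfold cy, T; apply Ceq; cbn [Re Im fst snd]; rewrite ?plus_INR, ?mult_INR; simpl INR; ring.
  - assert (cx 0%nat = (a - x, - T)) by (unfold cx, T; apply Ceq; simpl; ring).
    assert (cx (2 * N + 1)%nat = (a - x, T)) by (unfold cx, T; apply Ceq; cbn [Re Im fst snd]; rewrite ?plus_INR, ?mult_INR; simpl INR; ring).
    rewrite H, H0. field. split; apply C_nz_im; simpl; unfold T; pose proof (pos_INR N); nra.
  - f_equal. f_equal.
    rewrite rsumL_scal.
    assert (Hs : rsumL (map (fun j => Im (g j)) (seq 0 (2 * N + 1))) = - T / (a ^ 2 + T ^ 2)).
    { set (q1 := fun r => - (t * r) / (a * a + (t * r) * (t * r))).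
      set (h := fun s => - (2 * s * t) / (a * a + (2 * s * t) * (2 * s * t))).
      assert (HF : forall j, Im (g j) = q1 (1 - 2 * (INR j - INR N)) + h (INR j - INR N)).
      { intros j. unfold g. rewrite im_plus. unfold W, w'. rewrite lat_eq, IZR_sub_nat. fold a.
        replace (Cminus (0, t) (a, 2 * (INR j - INR N) * t)) with (0 - a, t - 2 * (INR j - INR N) * t)
          by (apply Ceq; simpl; ring).
        rewrite !Im_Cinv. unfold q1, h. f_equal; apply f_equal2; ring. }
      rewrite (map_ext _ _ HF). change (symsum (fun s => q1 (1 - 2 * s) + h s) N = - T / (a ^ 2 + T ^ 2)).
      unfold symsum. rewrite rsumL_plus. fold (symsum (fun s => q1 (1 - 2 * s)) N). fold (symsum h N).
      rewrite symsum_shift, symsum_odd.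
      - unfold q1, T. replace (a * a + t * (2 * INR N + 1) * (t * (2 * INR N + 1))) with (a ^ 2 + ((2 * INR N + 1) * t) ^ 2) by ring.
        unfold Rdiv. ring.
      - intros s0. unfold h. replace (2 * - s0 * t * (2 * - s0 * t)) with (2 * s0 * t * (2 * s0 * t)) by ring.
        unfold Rdiv. ring.
      - intros s0. unfold q1. replace (t * - s0 * (t * - s0)) with (t * s0 * (t * s0)) by ring.
        unfold Rdiv. ring. }
    rewrite Hs. field. unfold T. pose proof (pos_INR N). assert (0 < (2 * INR N + 1) * t) by nra.
    assert (0 <= a ^ 2) by (apply pow2_ge_0). assert (0 < ((2 * INR N + 1) * t)^2) by (apply pow_lt; lra). lra.
Qed.

End PerI.

Definition Vf (w t x K : R) (N : nat) : C :=
  cprod (map (fun i => fa x K ((2 * INR N + 1) * t) (2 * IZR (Z.of_nat i - Z.of_nat N) * w)) (seq 0 (2 * N + 1))).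

Definition QN (w t x K : R) (N : nat) : C :=
  Cmult (Cmult (sN w t (Cplus (Cplus (RtoC x) (RtoC K)) (0, t)) N) (Cconj (sN w t (Cplus (RtoC x) (0, t)) N)))
        (cexp (0, - Im (ZN w t N) * K)).

Lemma cprod_pos_factor {A} (F G : A -> C) l :
  (forall i, exists rho, 0 < rho /\ F i = Cmult (RtoC rho) (G i)) ->
  exists rho, 0 < rho /\ cprod (map F l) = Cmult (RtoC rho) (cprod (map G l)).
Proof.
  intros H. induction l; unfold cprod in *; simpl.
  - exists 1. split. lra. ring.
  - destruct IHl as [r1 [H1 E1]]. destruct (H a) as [r2 [H2 E2]]. exists (r2 * r1). split. nra.
    rewrite E1, E2, RtoC_mult. ring.
Qed.

Lemma Cmod_flip p q : Cmod (p, - q) = Cmod (p, q).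
Proof. unfold Cmod; simpl. f_equal. ring. Qed.

Lemma Cmod_fa x K T a : 0 < T -> Cmod (fa x K T a) = 1.
Proof.
  intros HT. unfold fa.
  assert (N1 : forall p, (p, T) <> RtoC 0) by (intros p; apply C_nz_im; simpl; lra).
  assert (N2 : forall p, (p, -T) <> RtoC 0) by (intros p; apply C_nz_im; simpl; lra).
  rewrite !Cmod_mult, !Cmod_div by auto. rewrite !Cmod_flip, Cmod_cexp. simpl. rewrite exp_0.
  assert (forall p, Cmod (p, T) <> 0) by (intros p E; apply (N1 p); apply Cmod_eq_0; auto).
  field. split; auto.
Qed.

Lemma sN_conj w t z N : Cconj (sN w t z N) = sN w t (Cconj z) N.
Proof. unfold sN. rewrite Cmult_conj, sigN_conj. auto. Qed.

Section Main.
Variables (w t x K : R).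
Hypothesis (Hw : 0 < w) (Ht : 0 < t).

Lemma QN_ident N : QN w t x K N = Cmult (Cconj (QN w t x K N)) (Vf w t x K N).
Proof.
  set (W := RtoC w). set (w' := (0, t) : C). set (X := RtoC x). set (Y := Cplus (RtoC x) (RtoC K)).
  set (kk := Cmult (RtoC (-2)) (Cminus Y X)).
  set (J := Jf w' kk (Cplus Y w') (Cminus X w') (Cminus Y w') (Cplus X w')).
  pose proof (key_ident w t x K Hw Ht N) as KI. fold W w' Y kk J X in KI.
  rewrite cprod_sq_iter in KI.
  destruct (cprod_pos_factor
     (fun i => cprod (map (fun j => J (lat W w' (Z.of_nat i - Z.of_nat N) (Z.of_nat j - Z.of_nat N))) (seq 0 (2 * N + 1))))
     (fun i => fa x K ((2 * INR N + 1) * t) (2 * IZR (Z.of_nat i - Z.of_nat N) * w)) (seq 0 (2 * N + 1)))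
     as [rho [Hrho Erho]].
  { intros i. apply per_i; auto. }
  cbn [fst snd] in KI. change (Jf w' (Cmult (RtoC (-2)) (Cminus Y X)) (Cplus Y w') (Cminus X w') (Cminus Y w') (Cplus X w')) with J in KI. change (Cmult (RtoC (-2)) (Cminus Y X)) with kk in KI. rewrite Erho in KI. fold (Vf w t x K N) in KI.
  set (e := Im (ZN w t N)) in *.
  assert (Ekk : cexp (Cmult kk (ZN w t N)) = Cmult (RtoC (exp (-2 * K * Re (ZN w t N)))) (cexp (0, -2 * K * e))).
  { rewrite <- cexp_split. f_equal. unfold kk, Y, X, e. destruct (ZN w t N). apply Ceq; simpl; ring. }
  rewrite Ekk in KI.
  set (r := exp (-2 * K * Re (ZN w t N))) in *. assert (Hr : 0 < r) by apply exp_pos.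
  assert (C1 : Cconj (Cplus Y w') = Cminus Y w') by (unfold Y, w'; apply Ceq; simpl; ring).
  assert (C2 : Cconj (Cplus X w') = Cminus X w') by (unfold X, w'; apply Ceq; simpl; ring).
  assert (EQ : QN w t x K N = Cmult (Cmult (sN w t (Cplus Y w') N) (sN w t (Cminus X w') N)) (cexp (0, - e * K))).
  { unfold QN. fold w' Y. rewrite sN_conj. fold X. rewrite C2. auto. }
  assert (EQc : Cconj (QN w t x K N) = Cmult (Cmult (sN w t (Cminus Y w') N) (sN w t (Cplus X w') N)) (cexp (0, e * K))).
  { rewrite EQ, !Cmult_conj, !sN_conj, C1, cexp_conj.
    assert (Cconj (Cminus X w') = Cplus X w') by (unfold X, w'; apply Ceq; simpl; ring). rewrite H.
    f_equal. f_equal. apply Ceq; simpl; ring. }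
  assert (Hmain : Cmult (QN w t x K N) (RtoC r) = Cmult (Cconj (QN w t x K N)) (Cmult (RtoC rho) (Vf w t x K N))).
  { rewrite EQc, EQ.
    assert (Ec : cexp (0, - e * K) = Cmult (cexp (0, -2 * K * e)) (cexp (0, e * K))).
    { rewrite <- cexp_add. f_equal. apply Ceq; simpl; ring. }
    rewrite Ec.
    transitivity (Cmult (Cmult (Cmult (sN w t (Cplus Y w') N) (sN w t (Cminus X w') N)) (Cmult (RtoC r) (cexp (0, -2 * K * e)))) (cexp (0, e * K))).
    ring. rewrite KI. ring. }
  assert (HV : Cmod (Vf w t x K N) = 1).
  { unfold Vf. apply Cmod_cprod_1. intros z Hz. apply in_map_iff in Hz. destruct Hz as [i [<- _]].
    apply Cmod_fa. pose proof (pos_INR N). nra. }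
  destruct (Ceq_dec (QN w t x K N) (RtoC 0)) as [Z0|Z0].
  - rewrite Z0. apply Ceq; simpl; ring.
  - assert (Hrr : r = rho).
    { apply (f_equal Cmod) in Hmain. rewrite !Cmod_mult, Cmod_conj, HV, !Cmod_R, !Rabs_pos_eq in Hmain by lra.
      assert (0 < Cmod (QN w t x K N)) by (apply Cmod_gt_0; auto). nra. }
    rewrite Hrr in Hmain.
    assert (Hrho0 : RtoC rho <> RtoC 0) by (intro E; inversion E; lra).
    apply (f_equal (fun z => Cdiv z (RtoC rho))) in Hmain.
    assert (Eq1 : Cdiv (Cmult (QN w t x K N) (RtoC rho)) (RtoC rho) = QN w t x K N) by (field; auto).
    rewrite Eq1 in Hmain.
    etransitivity; [exact Hmain|]. field. auto.
Qed.

End Main.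

Definition Cf (x K : R) : R := 19 * K^2 + 4 * Rabs K * Rabs (2*x+K) + 8 * Rabs K * Rabs x * Rabs (x+K) + 8 * Rabs K ^ 3.

Lemma Rabs_mul_le3 a b c : Rabs (a * b * c) = Rabs a * Rabs b * Rabs c.
Proof. rewrite !Rabs_mult. ring. Qed.

Section Core.
Variables (P D T a K x b c s : R).
Hypotheses (HT : 1 <= T) (HD : T^2 <= D) (HP : D <= 4 * P) (Ha : 2 * T * Rabs a <= D)
  (Hb : b * D = 2 * K * T) (Hb1 : Rabs b <= 1) (Hc : Rabs (c - 1) <= b^2/2) (Hs : Rabs (s - b) <= b^2/6)
  (Hs2 : Rabs s <= 2 * Rabs b) (HPD : P - D = - a * (2*x+K) + x * (x+K)) (HbT : Rabs b * T <= 2 * Rabs K).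

Lemma T2_le_4P : T^2 <= 4 * P.
Proof. lra. Qed.

Lemma T_le_T2 : T <= T^2.
Proof. simpl. nra. Qed.

Lemma b2T2 : b^2 * T^2 <= 4 * K^2.
Proof.
  assert (0 <= Rabs b * T) by (apply Rmult_le_pos; [apply Rabs_pos|lra]).
  replace (b^2*T^2) with ((Rabs b * T)^2) by (rewrite <- (pow2_abs b); ring).
  replace (4 * K^2) with ((2 * Rabs K)^2) by (rewrite <- (pow2_abs K); ring).
  apply pow_incr; lra.
Qed.

Lemma re_part : Rabs (P * (c - 1) + K * T * s) * T^2 <= 18 * K^2 * P.
Proof.
  assert (HP0 : 0 <= P) by (pose proof (pow2_ge_0 T); lra).
  pose proof b2T2. pose proof T2_le_4P.
  assert (E1 : Rabs (P * (c - 1)) * T^2 <= 2 * K^2 * P).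
  { rewrite Rabs_mult, Rabs_pos_eq by lra.
    assert (P * Rabs (c-1) * T^2 <= P * (b^2/2) * T^2).
    { apply Rmult_le_compat_r. apply pow2_ge_0. apply Rmult_le_compat_l; lra. }
    assert (P * (b^2/2) * T^2 = P * (b^2 * T^2) / 2) by field.
    assert (P * (b^2 * T^2) <= P * (4 * K^2)) by (apply Rmult_le_compat_l; lra). lra. }
  assert (E2 : Rabs (K * T * s) * T^2 <= 16 * K^2 * P).
  { rewrite Rabs_mul_le3, (Rabs_pos_eq T) by lra.
    assert (Rabs K * T * Rabs s * T^2 <= Rabs K * T * (2 * Rabs b) * T^2).
    { apply Rmult_le_compat_r. apply pow2_ge_0. apply Rmult_le_compat_l; auto. apply Rmult_le_pos. apply Rabs_pos. lra. }
    assert (Rabs K * T * (2 * Rabs b) * T^2 = 2 * Rabs K * (Rabs b * T) * T^2) by ring.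
    assert (2 * Rabs K * (Rabs b * T) * T^2 <= 2 * Rabs K * (2 * Rabs K) * (4 * P)).
    { apply Rmult_le_compat. apply Rmult_le_pos. pose proof (Rabs_pos K); lra. apply Rmult_le_pos. apply Rabs_pos. lra.
      apply pow2_ge_0. apply Rmult_le_compat_l. pose proof (Rabs_pos K); lra. auto. auto. }
    assert (2 * Rabs K * (2 * Rabs K) * (4 * P) = 16 * K^2 * P) by (rewrite <- (pow2_abs K); ring).
    lra. }
  pose proof (Rabs_triang (P * (c - 1)) (K * T * s)).
  assert (Rabs (P * (c - 1) + K * T * s) * T^2 <= (Rabs (P * (c - 1)) + Rabs (K * T * s)) * T^2).
  { apply Rmult_le_compat_r. apply pow2_ge_0. auto. }
  lra.
Qed.

Lemma im_part : Rabs (P * s - K * T * c - K * T) * T^2 <=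
   (K^2 + 4 * Rabs K * Rabs (2*x+K) + 8 * Rabs K * Rabs x * Rabs (x+K) + 8 * Rabs K ^ 3) * P.
Proof.
  assert (HP0 : 0 <= P) by (pose proof (pow2_ge_0 T); lra).
  pose proof b2T2. pose proof T2_le_4P. pose proof T_le_T2. pose proof (Rabs_pos K). pose proof (Rabs_pos b).
  assert (Eq : P * s - K * T * c - K * T = P * (s - b) + b * (- a * (2*x+K)) + b * (x * (x+K)) + K * T * (1 - c)).
  { assert (Hexpr : b * (- a * (2*x+K)) + b * (x * (x+K)) = b * P - 2 * K * T).
    { transitivity (b * (P - D)). rewrite HPD. ring. rewrite <- Hb. ring. }
    transitivity (P*(s-b) + (b * (-a*(2*x+K)) + b*(x*(x+K))) + K*T*(1-c)). rewrite Hexpr; ring. ring. }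
  rewrite Eq.
  assert (E1 : Rabs (P * (s - b)) * T^2 <= K^2 * P).
  { rewrite Rabs_mult, Rabs_pos_eq by lra.
    assert (P * Rabs (s - b) * T^2 <= P * (b^2/6) * T^2).
    { apply Rmult_le_compat_r. apply pow2_ge_0. apply Rmult_le_compat_l; lra. }
    assert (P * (b^2/6) * T^2 = P * (b^2 * T^2) / 6) by field.
    assert (P * (b^2 * T^2) <= P * (4 * K^2)) by (apply Rmult_le_compat_l; lra).
    assert (0 <= K^2 * P) by (apply Rmult_le_pos; [apply pow2_ge_0|lra]). lra. }
  assert (E2 : Rabs (b * (- a * (2*x+K))) * T^2 <= 4 * Rabs K * Rabs (2*x+K) * P).
  { rewrite Rabs_mult, Rabs_mult, Rabs_Ropp.
    assert (Rabs b * (Rabs a * Rabs (2 * x + K)) * T^2 = (Rabs b * T) * (T * Rabs a) * Rabs (2*x+K)) by ring.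
    assert ((Rabs b * T) * (T * Rabs a) <= Rabs K * T^2).
    { assert (Rabs b * T * (2 * (T * Rabs a)) <= Rabs b * T * D).
      { apply Rmult_le_compat_l. apply Rmult_le_pos; lra. lra. }
      assert (Rabs b * D = 2 * Rabs K * T).
      { assert (0 <= D) by (pose proof (pow2_ge_0 T); lra).
        rewrite <- (Rabs_pos_eq D) at 1 by lra. rewrite <- Rabs_mult, Hb, !Rabs_mult, (Rabs_pos_eq T), (Rabs_pos_eq 2) by lra. ring. }
      assert (Rabs b * T * D = 2 * Rabs K * T^2) by (replace (Rabs b * T * D) with (Rabs b * D * T) by ring; rewrite H6; ring).
      lra. }
    assert ((Rabs b * T) * (T * Rabs a) * Rabs (2*x+K) <= Rabs K * T^2 * Rabs (2*x+K)).
    { apply Rmult_le_compat_r. apply Rabs_pos. auto. }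
    assert (Rabs K * T^2 * Rabs (2*x+K) <= Rabs K * (4 * P) * Rabs (2*x+K)).
    { apply Rmult_le_compat_r. apply Rabs_pos. apply Rmult_le_compat_l; lra. }
    lra. }
  assert (E3 : Rabs (b * (x * (x+K))) * T^2 <= 8 * Rabs K * Rabs x * Rabs (x+K) * P).
  { rewrite !Rabs_mult.
    assert (Rabs b * (Rabs x * Rabs (x + K)) * T^2 = (Rabs b * T) * T * (Rabs x * Rabs (x+K))) by ring.
    assert (0 <= Rabs x * Rabs (x+K)) by (apply Rmult_le_pos; apply Rabs_pos).
    assert ((Rabs b * T) * T <= 2 * Rabs K * (4 * P)).
    { apply Rmult_le_compat; try lra. apply Rmult_le_pos; lra. }
    assert ((Rabs b * T) * T * (Rabs x * Rabs (x+K)) <= 2 * Rabs K * (4 * P) * (Rabs x * Rabs (x+K))).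
    { apply Rmult_le_compat_r; auto. }
    lra. }
  assert (E4 : Rabs (K * T * (1 - c)) * T^2 <= 8 * Rabs K ^ 3 * P).
  { rewrite Rabs_mul_le3, (Rabs_pos_eq T) by lra.
    replace (1 - c) with (- (c - 1)) by ring. rewrite Rabs_Ropp.
    assert (Rabs K * T * Rabs (c - 1) * T^2 <= Rabs K * T * (b^2/2) * T^2).
    { apply Rmult_le_compat_r. apply pow2_ge_0. apply Rmult_le_compat_l; auto. apply Rmult_le_pos; lra. }
    assert (Rabs K * T * (b^2/2) * T^2 = Rabs K * T * (b^2 * T^2) / 2) by field.
    assert (Rabs K * T * (b^2 * T^2) <= Rabs K * (4 * P) * (4 * K^2)).
    { apply Rmult_le_compat; try lra. apply Rmult_le_pos; lra. apply Rmult_le_pos; [apply pow2_ge_0|lra].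
      apply Rmult_le_compat_l; lra. }
    assert (Rabs K * (4 * P) * (4 * K^2) = 16 * Rabs K ^ 3 * P) by (rewrite <- (pow2_abs K); ring).
    lra. }
  set (A1 := P * (s - b)) in *. set (A2 := b * (- a * (2 * x + K))) in *. set (A3 := b * (x * (x + K))) in *.
  set (A4 := K * T * (1 - c)) in *.
  assert (Rabs (A1 + A2 + A3 + A4) <= Rabs A1 + Rabs A2 + Rabs A3 + Rabs A4).
  { eapply Rle_trans. apply Rabs_triang. eapply Rle_trans. apply Rplus_le_compat_r. apply Rabs_triang.
    eapply Rle_trans. apply Rplus_le_compat_r. apply Rplus_le_compat_r. apply Rabs_triang. lra. }
  assert (Rabs (A1 + A2 + A3 + A4) * T^2 <= (Rabs A1 + Rabs A2 + Rabs A3 + Rabs A4) * T^2).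
  { apply Rmult_le_compat_r. apply pow2_ge_0. auto. }
  lra.
Qed.

End Core.

Lemma fa_bound x K T a : 1 <= T -> 2 * Rabs K <= T -> x^2 + K^2 <= T^2 ->
  Cmod (Cminus (fa x K T a) (RtoC 1)) <= Cf x K / T^2.
Proof.
  intros HT HKT HxT.
  set (u := a - (x + K)). set (v := a - x). set (P := u * v + T^2). set (D := a^2 + T^2).
  set (b := 2 * K * T / D). set (c := cos b). set (s := sin b).
  assert (HD : T^2 <= D) by (unfold D; pose proof (pow2_ge_0 a); lra).
  assert (HT2 : 1 <= T^2) by (simpl; nra).
  assert (HD0 : 0 < D) by lra.
  assert (HP : D <= 4 * P).
  { unfold D, P, u, v. pose proof (pow2_ge_0 (a - 4/3*x - 2/3*K)). pose proof (pow2_ge_0 (x - 2/5*K)).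
    pose proof (pow2_ge_0 K). simpl in *. lra. }
  assert (Ha : 2 * T * Rabs a <= D).
  { unfold D. rewrite <- (pow2_abs a). pose proof (pow2_ge_0 (Rabs a - T)). simpl in *. nra. }
  assert (Hb : b * D = 2 * K * T) by (unfold b; field; lra).
  assert (HbT : Rabs b * T <= 2 * Rabs K).
  { assert (Rabs b * D = 2 * Rabs K * T).
    { rewrite <- (Rabs_pos_eq D) at 1 by lra. rewrite <- Rabs_mult, Hb, !Rabs_mult, (Rabs_pos_eq T), (Rabs_pos_eq 2) by lra. ring. }
    assert (Rabs b * T^2 <= Rabs b * D) by (apply Rmult_le_compat_l; [apply Rabs_pos|lra]).
    assert (Rabs b * T * T <= 2 * Rabs K * T) by (simpl in *; nra).
    apply (Rmult_le_reg_r T); lra. }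
  assert (Hb1 : Rabs b <= 1).
  { apply (Rmult_le_reg_r T). lra. lra. }
  pose proof (cos_bnd b Hb1) as Cb. fold c in Cb.
  assert (Hb2 : b^2 <= 1) by (rewrite <- (pow2_abs b); simpl; pose proof (Rabs_pos b); nra).
  assert (Hb4 : b^4 <= b^2) by (replace (b^4) with (b^2*b^2) by ring; pose proof (pow2_ge_0 b); nra).
  assert (Hc : Rabs (c - 1) <= b^2/2) by (split_Rabs; lra).
  pose proof (sin_bnd b Hb1) as Sb. fold s in Sb.
  assert (Hb3 : Rabs b ^ 3 <= b^2) by (rewrite <- (pow2_abs b); simpl; pose proof (Rabs_pos b); nra).
  assert (Hs : Rabs (s - b) <= b^2/6) by lra.
  assert (Hs2 : Rabs s <= 2 * Rabs b).
  { replace s with ((s - b) + b) by ring. eapply Rle_trans. apply Rabs_triang.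
    assert (b^2 <= Rabs b) by (rewrite <- (pow2_abs b); simpl; pose proof (Rabs_pos b); nra). lra. }
  assert (HPD : P - D = - a * (2*x+K) + x * (x+K)) by (unfold P, D, u, v; ring).
  assert (RE : Rabs (P * (c - 1) + K * T * s) * T^2 <= 18 * K^2 * P) by (eapply re_part; eauto).
  assert (IM : Rabs (P * s - K * T * c - K * T) * T^2 <=
   (K^2 + 4 * Rabs K * Rabs (2*x+K) + 8 * Rabs K * Rabs x * Rabs (x+K) + 8 * Rabs K ^ 3) * P) by (eapply im_part; eauto).
  assert (HP0 : 0 < P) by lra.
  assert (NZ1 : (u, T) <> RtoC 0) by (apply C_nz_im; simpl; lra).
  assert (NZ2 : (v, -T) <> RtoC 0) by (apply C_nz_im; simpl; lra).
  assert (NZ3 : (P, K * T) <> RtoC 0) by (intro E; inversion E; lra).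
  assert (E1 : Cmult (Cdiv (u, -T) (u, T)) (Cdiv (v, T) (v, -T)) = Cdiv (P, - (K * T)) (P, K * T)).
  { assert (Ea : Cmult (u, -T) (v, T) = (P, - (K*T))) by (unfold P, u, v; apply Ceq; simpl; ring).
    assert (Eb : Cmult (u, T) (v, -T) = (P, K*T)) by (unfold P, u, v; apply Ceq; simpl; ring).
    rewrite <- Ea, <- Eb. field. split; auto. }
  assert (E2 : cexp (0, 2 * K * T / (a^2 + T^2)) = (c, s)).
  { unfold cexp, c, s, b, D. apply Ceq; simpl; rewrite exp_0; ring. }
  unfold fa. fold u v. rewrite E1, E2.
  assert (E3 : Cminus (Cmult (Cdiv (P, - (K * T)) (P, K * T)) (c, s)) (RtoC 1) =
               Cdiv (P * (c - 1) + K * T * s, P * s - K * T * c - K * T) (P, K * T)).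
  { transitivity (Cdiv (Cminus (Cmult (P, - (K * T)) (c, s)) (P, K * T)) (P, K * T)).
    field; auto. f_equal. apply Ceq; simpl; ring. }
  rewrite E3, Cmod_div by auto.
  pose proof (re_le_Cmod (P, K * T)) as HPm. simpl in HPm. rewrite Rabs_pos_eq in HPm by lra.
  pose proof (Cmod_le_abs (P * (c - 1) + K * T * s, P * s - K * T * c - K * T)) as Hn. simpl in Hn.
  set (num := Cmod (P * (c - 1) + K * T * s, P * s - K * T * c - K * T)) in *.
  assert (HnT : num * T^2 <= Cf x K * P).
  { assert (num * T^2 <= (Rabs (P * (c - 1) + K * T * s) + Rabs (P * s - K * T * c - K * T)) * T^2)
      by (apply Rmult_le_compat_r; [apply pow2_ge_0 | lra]).
    assert (Cf x K * P = 18 * K^2 * P + (K^2 + 4 * Rabs K * Rabs (2*x+K) + 8 * Rabs K * Rabs x * Rabs (x+K) + 8 * Rabs K ^ 3) * P)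
      by (unfold Cf; ring).
    lra. }
  assert (0 <= num) by (apply Cmod_ge_0).
  apply (Rmult_le_reg_r (Cmod (P, K * T) * T^2)). apply Rmult_lt_0_compat; lra.
  replace (num / Cmod (P, K * T) * (Cmod (P, K * T) * T ^ 2)) with (num * T^2) by (field; lra).
  replace (Cf x K / T ^ 2 * (Cmod (P, K * T) * T ^ 2)) with (Cf x K * Cmod (P, K * T)) by (field; lra).
  assert (0 <= Cf x K).
  { unfold Cf. pose proof (pow2_ge_0 K). pose proof (Rabs_pos K). pose proof (Rabs_pos x). pose proof (Rabs_pos (2*x+K)).
    pose proof (Rabs_pos (x+K)). assert (0 <= Rabs K ^3) by (apply pow_le; lra).
    assert (0 <= Rabs K * Rabs (2 * x + K)) by (apply Rmult_le_pos; lra).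
    assert (0 <= Rabs K * Rabs x * Rabs (x + K)) by (repeat apply Rmult_le_pos; lra). lra. }
  assert (Cf x K * P <= Cf x K * Cmod (P, K * T)) by (apply Rmult_le_compat_l; lra).
  lra.
Qed.

Lemma lim_inv_S (C0 : R) : is_lim_seq (fun N => C0 / (INR N + 1)) 0.
Proof.
  assert (H : is_lim_seq (fun n => / INR n) 0).
  { pose proof is_lim_seq_INR as HI. apply (is_lim_seq_inv INR p_infty) in HI. exact HI. discriminate. }
  apply (is_lim_seq_incr_1 (fun n => / INR n) 0) in H.
  apply (is_lim_seq_scal_l _ C0) in H.
  assert (Hr : Rbar_mult (Finite C0) (Finite 0) = Finite 0) by (simpl; f_equal; ring). rewrite Hr in H.
  eapply is_lim_seq_ext; [|exact H]. intros n. cbv beta. rewrite S_INR. unfold Rdiv; ring.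
Qed.

Lemma Cf_nonneg x K : 0 <= Cf x K.
Proof.
  unfold Cf. pose proof (pow2_ge_0 K). pose proof (Rabs_pos K). pose proof (Rabs_pos x). pose proof (Rabs_pos (2*x+K)).
  pose proof (Rabs_pos (x+K)). assert (0 <= Rabs K ^3) by (apply pow_le; lra).
  assert (0 <= Rabs K * Rabs (2 * x + K)) by (apply Rmult_le_pos; lra).
  assert (0 <= Rabs K * Rabs x * Rabs (x + K)) by (repeat apply Rmult_le_pos; lra). lra.
Qed.

Section Final.
Variables (w t x K : R).
Hypothesis (Hw : 0 < w) (Ht : 0 < t).

Lemma Vf_close : exists N1, forall N, (N1 <= N)%nat ->
  Cmod (Cminus (Vf w t x K N) (RtoC 1)) <= 3 * (Cf x K / (t^2)) / (INR N + 1).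
Proof.
  pose proof (Cf_nonneg x K) as HC.
  set (Rb := 1 + 2 * Rabs K + x^2 + K^2 + Cf x K / t).
  destruct (nat_above (Rb / t)) as [N1 HN1]. exists N1. intros N HN.
  set (T := (2 * INR N + 1) * t).
  assert (HTb : Rb <= T).
  { apply le_INR in HN. pose proof (pos_INR N). unfold T.
    assert (Rb <= INR N1 * t). { apply (Rmult_le_compat_r t) in HN1; [|lra]. unfold Rdiv in HN1.
      rewrite Rmult_assoc, Rinv_l, Rmult_1_r in HN1 by lra. lra. }
    nra. }
  assert (HCt : 0 <= Cf x K / t) by (unfold Rdiv; apply Rmult_le_pos; [auto| left; apply Rinv_0_lt_compat; auto]).
  assert (HT1 : 1 <= T) by (unfold Rb in HTb; pose proof (Rabs_pos K); pose proof (pow2_ge_0 x); pose proof (pow2_ge_0 K); lra).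
  assert (HT2 : 2 * Rabs K <= T) by (unfold Rb in HTb; pose proof (pow2_ge_0 x); pose proof (pow2_ge_0 K); lra).
  assert (HT3 : x^2 + K^2 <= T^2) by (unfold Rb in HTb; pose proof (Rabs_pos K); simpl; nra).
  assert (HT4 : Cf x K / t <= T) by (unfold Rb in HTb; pose proof (Rabs_pos K); pose proof (pow2_ge_0 x); pose proof (pow2_ge_0 K); lra).
  unfold Vf. fold T.
  eapply Rle_trans. apply cprod_close. rewrite map_map.
  set (sg := rsumL _).
  assert (Hsg : sg <= Cf x K / ((2 * INR N + 1) * t^2)).
  { unfold sg. eapply Rle_trans. apply (rsumL_bound _ _ (Cf x K / T^2)).
    intros i _. apply fa_bound; auto.
    rewrite length_seq, plus_INR, mult_INR. simpl (INR 2). simpl (INR 1). right. unfold T. field.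
    pose proof (pos_INR N). split; lra. }
  assert (Hsg0 : 0 <= sg) by (unfold sg; apply rsumL_nonneg; intros; apply Cmod_ge_0).
  assert (Hsg1 : sg <= 1).
  { eapply Rle_trans. apply Hsg. pose proof (pos_INR N).
    replace (Cf x K / ((2 * INR N + 1) * t ^ 2)) with ((Cf x K / t) / T) by (unfold T; field; lra).
    apply (Rmult_le_reg_r T). lra. unfold Rdiv at 1. rewrite Rmult_assoc, Rinv_l by lra. lra. }
  destruct (exp_bounds sg) as [_ [_ E0]]. rewrite Rabs_pos_eq; lra.
  rewrite Rabs_pos_eq in E0 by (pose proof (exp_ineq1_le sg); lra). rewrite (Rabs_pos_eq sg) in E0 by lra.
  eapply Rle_trans. apply E0.
  assert (Cf x K / ((2 * INR N + 1) * t ^ 2) <= (Cf x K / t^2) / (INR N + 1)).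
  { pose proof (pos_INR N). unfold Rdiv. rewrite Rinv_mult. rewrite (Rmult_comm (/ (2 * INR N + 1))).
    rewrite <- Rmult_assoc. apply Rmult_le_compat_l. apply Rmult_le_pos; auto. left; apply Rinv_0_lt_compat, pow_lt; auto.
    apply Rinv_le_contravar; lra. }
  unfold Rdiv in *. lra.
Qed.

Let W := RtoC w.
Let w' : C := (0, t).

Lemma core :
  Im (Cmult (Cmult (wsigma W w' (Cplus (Cplus (RtoC x) (RtoC K)) w')) (Cconj (wsigma W w' (Cplus (RtoC x) w'))))
            (cexp (0, - Im (wzeta W w' w') * K))) = 0.
Proof.
  set (z1 := Cplus (Cplus (RtoC x) (RtoC K)) w'). set (z2 := Cplus (RtoC x) w').
  assert (CA : Ccv (fun N => sN w t z1 N) (wsigma W w' z1)).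
  { unfold wsigma, sN. change (fun O => Cmult (Cminus (RtoC 1) (Cdiv z1 O))
           (cexp (Cplus (Cdiv z1 O) (Cdiv (Cmult z1 z1) (Cmult (RtoC 2) (Cmult O O)))))) with (Ef z1).
    apply Ccv_mult. apply Ccv_const. apply sigma_cv; auto. }
  assert (CB : Ccv (fun N => sN w t z2 N) (wsigma W w' z2)).
  { unfold wsigma, sN. change (fun O => Cmult (Cminus (RtoC 1) (Cdiv z2 O))
           (cexp (Cplus (Cdiv z2 O) (Cdiv (Cmult z2 z2) (Cmult (RtoC 2) (Cmult O O)))))) with (Ef z2).
    apply Ccv_mult. apply Ccv_const. apply sigma_cv; auto. }
  assert (CZ : Ccv (fun N => ZN w t N) (wzeta W w' w')).
  { unfold wzeta, ZN. change (fun O => Cplus (Cplus (Cinv (Cminus w' O)) (Cinv O)) (Cdiv w' (Cmult O O))) with (gz w').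
    apply Ccv_plus. apply Ccv_const. apply zeta_cv; auto. }
  set (E := wzeta W w' w') in *.
  assert (CE : Ccv (fun N => ((0 : R), - Im (ZN w t N) * K) : C) (0, - Im E * K)).
  { split; cbn [Re Im fst snd]. apply is_lim_seq_const.
    destruct CZ as [_ CZ2]. apply (is_lim_seq_ext (fun N => Im (ZN w t N) * (- K))). intros; ring.
    replace (- Im E * K) with (Im E * (- K)) by ring. apply is_lim_seq_mult'; auto. apply is_lim_seq_const. }
  assert (CQ : Ccv (fun N => QN w t x K N)
                 (Cmult (Cmult (wsigma W w' z1) (Cconj (wsigma W w' z2))) (cexp (0, - Im E * K)))).
  { unfold QN. apply Ccv_mult. apply Ccv_mult. exact CA. apply Ccv_conj. exact CB. apply Ccv_cexp. exact CE. }
  set (Q := Cmult (Cmult (wsigma W w' z1) (Cconj (wsigma W w' z2))) (cexp (0, - Im E * K))) in *.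
  destruct CQ as [CQ1 CQ2].
  destruct Vf_close as [N1 HN1].
  set (M := 3 * (Cf x K / t^2)).
  set (X := fun N => Rabs (Re (QN w t x K N)) + Rabs (Im (QN w t x K N))).
  assert (HX : is_lim_seq X (Rabs (Re Q) + Rabs (Im Q))).
  { unfold X. apply is_lim_seq_plus'; apply (is_lim_seq_abs _ (Finite _)); auto. }
  assert (Hbnd : forall N, (N1 <= N)%nat -> Rabs (Im (QN w t x K N)) <= X N * (M / (INR N + 1))).
  { intros N HN. pose proof (QN_ident w t x K Hw Ht N) as QI. set (q := QN w t x K N) in *.
    assert (Hd : Cminus q (Cconj q) = Cmult (Cconj q) (Cminus (Vf w t x K N) (RtoC 1))).
    { rewrite QI at 1. ring. }
    apply (f_equal Cmod) in Hd. rewrite Cmod_mult, Cmod_conj in Hd.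
    assert (Cmod (Cminus q (Cconj q)) = 2 * Rabs (Im q)).
    { destruct q as [q1 q2]. unfold Cmod; simpl. 
      replace ((q1 + - q1) * ((q1 + - q1) * 1) + (q2 + - - q2) * ((q2 + - - q2) * 1)) with ((2 * Rabs q2)^2)
        by (rewrite Rpow_mult_distr, pow2_abs; simpl; ring).
      apply sqrt_pow2. pose proof (Rabs_pos q2); lra. }
    pose proof (HN1 N HN). pose proof (Cmod_le_abs q). pose proof (Cmod_ge_0 q).
    pose proof (Cmod_ge_0 (Cminus (Vf w t x K N) (RtoC 1))).
    assert (Cmod q * Cmod (Cminus (Vf w t x K N) (RtoC 1)) <= X N * (M / (INR N + 1))).
    { apply Rmult_le_compat; auto. }
    pose proof (Rabs_pos (Im q)). lra. }
  assert (HIm0 : is_lim_seq (fun N => Im (QN w t x K N)) 0).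
  { apply (is_lim_seq_le_le_loc (fun N => - (X N * (M / (INR N + 1)))) _ (fun N => X N * (M / (INR N + 1)))).
    - exists N1. intros N HN. pose proof (Hbnd N HN). split_Rabs; lra.
    - replace (Finite 0) with (Rbar_opp (Finite ((Rabs (Re Q) + Rabs (Im Q)) * 0))) by (simpl; f_equal; ring).
      apply -> is_lim_seq_opp. apply is_lim_seq_mult'; auto. apply lim_inv_S.
    - replace (Finite 0) with (Finite ((Rabs (Re Q) + Rabs (Im Q)) * 0)) by (f_equal; ring).
      apply is_lim_seq_mult'; auto. apply lim_inv_S. }
  pose proof (is_lim_seq_unique _ _ CQ2). rewrite (is_lim_seq_unique _ _ HIm0) in H. inversion H. auto.
Qed.

End Final.

Lemma reduce_psi (A B S Z E : C) (x K : R) :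
  B <> RtoC 0 -> S <> RtoC 0 -> Im S = 0 -> Im Z = 0 ->
  Im (Cmult (Cmult A (Cconj B)) (cexp (0, - Im E * K))) = 0 ->
  Im (Cmult (Cdiv A (Cmult B S)) (cexp (Copp (Cplus (Cmult Z (RtoC x)) (Cmult E (RtoC K)))))) = 0.
Proof.
  intros HB HS HSi HZi HQ.
  destruct S as [s s']. simpl in HSi. subst s'. destruct Z as [z z']. simpl in HZi. subst z'.
  assert (Hs : s <> 0) by (intro E0; apply HS; subst; auto).
  assert (E1 : Copp (Cplus (Cmult (z, 0) (RtoC x)) (Cmult E (RtoC K))) = (- (z * x) - Re E * K, - Im E * K)).
  { destruct E; apply Ceq; simpl; ring. }
  rewrite E1, cexp_split.
  assert (HB2 : Cmod B <> 0) by (intro E0; apply HB; apply Cmod_eq_0; auto).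
  assert (E2 : Cdiv A (Cmult B (s, 0)) = Cmult (RtoC (/ (Cmod B ^ 2 * s))) (Cmult A (Cconj B))).
  { rewrite RtoC_inv by (apply Rmult_integral_contrapositive; split; auto; apply pow_nonzero; auto).
    rewrite RtoC_mult, Cmod2_conj.
    replace (s, 0) with (RtoC s) by auto.
    assert (Cconj B <> RtoC 0). { intro E0. apply HB. rewrite <- (Cconj_conj B), E0. apply Cconj_RtoC. }
    assert (RtoC s <> RtoC 0) by (intro E0; inversion E0; auto).
    field. repeat split; auto. }
  rewrite E2.
  replace (Cmult (Cmult (RtoC (/ (Cmod B ^ 2 * s))) (Cmult A (Cconj B))) (Cmult (RtoC (exp (- (z * x) - Re E * K))) (cexp (0, - Im E * K))))
    with (Cmult (RtoC (/ (Cmod B ^ 2 * s) * exp (- (z * x) - Re E * K))) (Cmult (Cmult A (Cconj B)) (cexp (0, - Im E * K)))).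
  rewrite im_scal_l, HQ. ring.
  rewrite RtoC_mult. ring.
Qed.

Theorem proposition2p1 (g2 g3 w t : R) :
  g2 ^ 3 - 27 * g3 ^ 2 > 0 ->
  0 < w -> 0 < t ->
  wg2 (RtoC w) (0, t) = RtoC g2 ->
  wg3 (RtoC w) (0, t) = RtoC g3 ->
  forall x k l : R,
    (wsigma (RtoC w) (0, t) (Cplus (RtoC x) (0, t)) <> RtoC 0 ->
     wsigma (RtoC w) (0, t) (RtoC k) <> RtoC 0 ->
     Im (Psi1 (RtoC w) (0, t) (RtoC x) (RtoC k)) = 0) /\
    (wsigma (RtoC w) (0, t) (Cplus (RtoC x) (0, t)) <> RtoC 0 ->
     wsigma (RtoC w) (0, t) (RtoC k) <> RtoC 0 ->
     wsigma (RtoC w) (0, t) (RtoC l) <> RtoC 0 ->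
     wsigma (RtoC w) (0, t) (RtoC (k + l)) <> RtoC 0 ->
     Im (Psi2 (RtoC w) (0, t) (RtoC x) (RtoC k) (RtoC l)) = 0).
Proof.
  intros _ Hw Ht _ _ x k l. split.
  - intros HB HS. unfold Psi1. apply reduce_psi; auto.
    apply wsigma_real. apply wzeta_real. apply (core w t x k Hw Ht).
  - intros HB _ _ HS. unfold Psi2.
    replace (Cplus (Cplus (Cplus (RtoC x) (RtoC k)) (RtoC l)) (0, t)) with (Cplus (Cplus (RtoC x) (RtoC (k + l))) (0, t))
      by (apply Ceq; simpl; ring).
    replace (Cplus (RtoC k) (RtoC l)) with (RtoC (k + l)) by (apply Ceq; simpl; ring).
    apply reduce_psi; auto.
    apply wsigma_real. rewrite im_plus, !wzeta_real. ring. apply (core w t x (k + l) Hw Ht).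
Qed.
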